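(* Let $h=h^*\in C^\infty(\mathbb{T}_\theta^4)$ and set $$\mathcal{R}_h=e^{-h}K(\nabla)\Big(\sum_{i=1}^4\delta_i^2(h)\Big)+e^{-h}H(\nabla_{(1)},\nabla_{(2)})\Big(\sum_{i=1}^4\delta_i(h)\,\delta_i(h)\Big)$$ (so that the scalar curvature is a universal constant multiple of $\mathcal{R}_h$). Then $$\varphi_0(\mathcal{R}_h)=\frac12\,\varphi_0\Big(\sum_{i=1}^4e^{-h}\delta_i^2(h)\Big)+\varphi_0\Big(\sum_{i=1}^4G(\nabla)\big(e^{-h}\delta_i(h)\big)\,\delta_i(h)\Big),\qquad G(s)=H(s,-s)=\frac{-4s-3e^{-s}+e^s+2}{4s^2}.$$
   Context: Noncommutative 4-torus: $\theta$ real skew-symmetric $4\times4$; $C^\infty(\mathbb{T}_\theta^4)$ the smooth algebra generated by unitaries $U_1,\dots,U_4$ with $U_kU_l=e^{2\pi i\theta_{kl}}U_lU_k$ (rapidly decreasing Fourier series $\sum a_\ell U^\ell$); $\varphi_0(\sum a_\ell U^\ell)=a_0$ the faithful tracial state; $\delta_j(U_k)=\delta_{jk}U_k$ the commuting derivations. $\Delta(a)=e^{-h}ae^h$, $\nabla=\log\Delta$, i.e. $\nabla(a)=ah-ha$. $K(s)=\frac{1-e^{-s}}{2s}$, $H(s,t)=-\frac{e^{-s-t}((-e^s-3)s(e^t-1)+(e^s-1)(3e^t+1)t)}{4st(s+t)}$; $K,H,G$ are entire (removable singularities). For entire $F(s)=\sum c_js^j$, $F(\nabla)(a)=\sum c_j\nabla^j(a)$;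 for entire $F(s,t)=\sum c_{jk}s^jt^k$, $F(\nabla_{(1)},\nabla_{(2)})(ab)=\sum c_{jk}\nabla^j(a)\nabla^k(b)$, extended linearly. *)

(* Defs.v *)
From Stdlib Require Import Reals ZArith List ClassicalEpsilon.
Import ListNotations.
Open Scope R_scope.

Definition C := (R * R)%type.
Definition C0 : C := (0, 0).
Definition C1 : C := (1, 0).
Definition Cadd (x y : C) : C := (fst x + fst y, snd x + snd y).
Definition Cmul (x y : C) : C :=
  (fst x * fst y - snd x * snd y, fst x * snd y + snd x * fst y).
Definition Copp (x : C) : C := (- fst x, - snd x).
Definition Cconj (x : C) : C := (fst x, - snd x).
Definition Cscal (r : R) (x : C) : C := (r * fst x, r * snd x).
Definition Cexpi (t : R) : C := (cos t, sin t).
Definition Cabs (x : C) : R := sqrt (fst x ^ 2 + snd x ^ 2).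
Definition Csum (l : list C) : C := fold_right Cadd C0 l.

Definition Ccv (u : nat -> C) (l : C) : Prop :=
  Un_cv (fun n => fst (u n)) (fst l) /\ Un_cv (fun n => snd (u n)) (snd l).
Definition Clim (u : nat -> C) : C := epsilon (inhabits C0) (fun l => Ccv u l).

Record Z4 := mkZ4 { z1 : Z; z2 : Z; z3 : Z; z4 : Z }.
Definition zc (n : Z4) (j : nat) : Z :=
  match j with 1%nat => z1 n | 2%nat => z2 n | 3%nat => z3 n | 4%nat => z4 n | _ => 0%Z end.
Definition Z4zero : Z4 := mkZ4 0 0 0 0.
Definition Z4opp (n : Z4) : Z4 := mkZ4 (- z1 n) (- z2 n) (- z3 n) (- z4 n).
Definition Z4sub (n m : Z4) : Z4 :=
  mkZ4 (z1 n - z1 m) (z2 n - z2 m) (z3 n - z3 m) (z4 n - z4 m).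
Definition zrange (N : nat) : list Z :=
  map (fun k => (Z.of_nat k - Z.of_nat N)%Z) (seq 0 (2 * N + 1)).
Definition box (N : nat) : list Z4 :=
  flat_map (fun a => flat_map (fun b => flat_map (fun c =>
    map (fun d => mkZ4 a b c d) (zrange N)) (zrange N)) (zrange N)) (zrange N).
Definition pairs4 : list (nat * nat) :=
  [(1,2);(1,3);(1,4);(2,3);(2,4);(3,4)]%nat.

(* ---------- the noncommutative 4-torus, in Fourier coefficients ----------
   An element a is identified with its coefficient function: a = sum_l a(l) U^l,
   with the convention U^l = U1^{l1} U2^{l2} U3^{l3} U4^{l4}.
   theta : nat -> nat -> R, indices 1..4. *)
Definition NCT := Z4 -> C.

Definition rapid (a : NCT) : Prop :=
  forall k : nat, exists M : R, forall n : Z4,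
    Cabs (a n) * (1 + Rabs (IZR (z1 n)) + Rabs (IZR (z2 n))
                    + Rabs (IZR (z3 n)) + Rabs (IZR (z4 n))) ^ k <= M.

(* U^m U^k = phase m k U^{m+k} *)
Definition phase (theta : nat -> nat -> R) (m k : Z4) : C :=
  Cexpi (2 * PI * fold_right Rplus 0
    (map (fun p => theta (snd p) (fst p) * IZR (zc m (snd p)) * IZR (zc k (fst p))) pairs4)).

Definition add (a b : NCT) : NCT := fun n => Cadd (a n) (b n).
Definition opp (a : NCT) : NCT := fun n => Copp (a n).
Definition sub (a b : NCT) : NCT := add a (opp b).
Definition scal (r : R) (a : NCT) : NCT := fun n => Cscal r (a n).
Definition one : NCT := fun n =>
  if (Z.eqb (z1 n) 0 && Z.eqb (z2 n) 0 && Z.eqb (z3 n) 0 && Z.eqb (z4 n) 0)%bool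
  then C1 else C0.

Definition mul (theta : nat -> nat -> R) (a b : NCT) : NCT := fun n =>
  Clim (fun N => Csum (map (fun m =>
    Cmul (Cmul (a m) (b (Z4sub n m))) (phase theta m (Z4sub n m))) (box N))).

(* adjoint: (U^l)^* = U4^{-l4} ... U1^{-l1} *)
Definition star (theta : nat -> nat -> R) (a : NCT) : NCT := fun n =>
  Cmul (Cconj (a (Z4opp n)))
    (Cexpi (2 * PI * fold_right Rplus 0
      (map (fun p => theta (snd p) (fst p) * IZR (zc n (snd p)) * IZR (zc n (fst p))) pairs4))).

Fixpoint powA (theta : nat -> nat -> R) (a : NCT) (k : nat) : NCT :=
  match k with O => one | S k' => mul theta (powA theta a k') a end.

Definition expA (theta : nat -> nat -> R) (a : NCT) : NCT := fun n =>
  Clim (fun N => Csum (map (fun k => Cscal (/ INR (fact k)) (powA theta a k n))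
                          (seq 0 (N + 1)))).

(* canonical derivations: delta_j(U_k) = delta_{jk} U_k *)
Definition delta (j : nat) (a : NCT) : NCT := fun n => Cscal (IZR (zc n j)) (a n).

Definition phi0 (a : NCT) : C := a Z4zero.

Definition sum4 (f : nat -> NCT) : NCT := add (add (add (f 1%nat) (f 2%nat)) (f 3%nat)) (f 4%nat).

Definition nabla (theta : nat -> nat -> R) (h a : NCT) : NCT :=
  sub (mul theta a h) (mul theta h a).

Definition fcalc1 (theta : nat -> nat -> R) (h : NCT) (c : nat -> R) (a : NCT) : NCT :=
  fun n => Clim (fun N => Csum (map (fun j =>
    Cscal (c j) (Nat.iter j (nabla theta h) a n)) (seq 0 (N + 1)))).

(* F(nabla_(1), nabla_(2))(a b) = sum_{j,k} c_{jk} nabla^j(a) nabla^k(b) *)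
Definition fcalc2 (theta : nat -> nat -> R) (h : NCT) (c : nat -> nat -> R) (a b : NCT) : NCT :=
  fun n => Clim (fun N => Csum (map (fun j => Csum (map (fun k =>
    Cscal (c j k) (mul theta (Nat.iter j (nabla theta h) a) (Nat.iter k (nabla theta h) b) n))
    (seq 0 (N + 1)))) (seq 0 (N + 1)))).

Definition Kf (s : R) : R := (1 - exp (- s)) / (2 * s).
Definition Hf (s t : R) : R :=
  - (exp (- s - t) * ((- exp s - 3) * s * (exp t - 1) + (exp s - 1) * (3 * exp t + 1) * t))
  / (4 * s * t * (s + t)).
Definition Gf (s : R) : R := (- 4 * s - 3 * exp (- s) + exp s + 2) / (4 * s ^ 2).

(* c is the Taylor coefficient sequence of the entire function with values F
   off the removable singularity *)
Definition taylor1 (c : nat -> R) (F : R -> R) : Prop :=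
  forall s, s <> 0 -> Pser c s (F s).
Definition taylor2 (c : nat -> nat -> R) (F : R -> R -> R) : Prop :=
  forall s t, s <> 0 -> t <> 0 -> s + t <> 0 ->
    Un_cv (fun N => sum_f_R0 (fun j => sum_f_R0 (fun k => c j k * s ^ j * t ^ k) N) N) (F s t)
    /\ exists M, forall N,
       sum_f_R0 (fun j => sum_f_R0 (fun k => Rabs (c j k * s ^ j * t ^ k)) N) N <= M.

Definition curvR (theta : nat -> nat -> R) (cK : nat -> R) (cH : nat -> nat -> R) (h : NCT) : NCT :=
  add (mul theta (expA theta (opp h)) (fcalc1 theta h cK (sum4 (fun i => delta i (delta i h)))))
      (mul theta (expA theta (opp h)) (sum4 (fun i => fcalc2 theta h cH (delta i h) (delta i h)))).

(* Main.v *)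
From Stdlib Require Import Reals Lra Lia List Permutation ZArith FunctionalExtensionality Classical ClassicalEpsilon.
Require Import Defs.
Import ListNotations.
Open Scope R_scope.

Lemma C_ext (x y : C) : fst x = fst y -> snd x = snd y -> x = y.
Proof. destruct x, y; simpl; intros; subst; reflexivity. Qed.

Ltac Cunf := unfold Cadd, Cmul, Copp, Cscal, C0, C1, Cconj in *.
Ltac Cring := apply C_ext; Cunf; simpl; ring.

Definition cn (x : C) : R := Rabs (fst x) + Rabs (snd x).
Definition Csub (x y : C) : C := Cadd x (Copp y).

Lemma cn_ge0 x : 0 <= cn x.
Proof. unfold cn; pose proof (Rabs_pos (fst x)); pose proof (Rabs_pos (snd x)); lra. Qed.
Lemma cn_add x y : cn (Cadd x y) <= cn x + cn y.
Proof. unfold cn, Cadd; simpl.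
  pose proof (Rabs_triang (fst x) (fst y)); pose proof (Rabs_triang (snd x) (snd y)); lra. Qed.
Lemma cn_opp x : cn (Copp x) = cn x.
Proof. unfold cn, Copp; simpl; rewrite !Rabs_Ropp; reflexivity. Qed.
Lemma cn_sub x y : cn (Csub x y) <= cn x + cn y.
Proof. unfold Csub; rewrite <- (cn_opp y); apply cn_add. Qed.
Lemma cn_scal r x : cn (Cscal r x) = Rabs r * cn x.
Proof. unfold cn, Cscal; simpl; rewrite !Rabs_mult; ring. Qed.
Lemma cn_mul x y : cn (Cmul x y) <= cn x * cn y.
Proof. destruct x as [a b], y as [c d]; unfold cn, Cmul; simpl.
  pose proof (Rabs_triang (a*c) (- (b*d))).
  pose proof (Rabs_triang (a*d) (b*c)).
  rewrite Rabs_Ropp in H. rewrite !Rabs_mult in *.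
  pose proof (Rabs_pos a); pose proof (Rabs_pos b); pose proof (Rabs_pos c); pose proof (Rabs_pos d).
  unfold Rminus. nra. Qed.
Lemma cn_C0 : cn C0 = 0.
Proof. unfold cn, C0; simpl; rewrite Rabs_R0; ring. Qed.
Lemma cn_zero x : cn x = 0 -> x = C0.
Proof. unfold cn; intro H; pose proof (Rabs_pos (fst x)); pose proof (Rabs_pos (snd x)).
  apply C_ext; unfold C0; simpl.
  - destruct (Req_dec (fst x) 0); auto. pose proof (Rabs_pos_lt _ H2); lra.
  - destruct (Req_dec (snd x) 0); auto. pose proof (Rabs_pos_lt _ H2); lra. Qed.
Lemma cn_le_fst x : Rabs (fst x) <= cn x.
Proof. unfold cn; pose proof (Rabs_pos (snd x)); lra. Qed.
Lemma cn_le_snd x : Rabs (snd x) <= cn x.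
Proof. unfold cn; pose proof (Rabs_pos (fst x)); lra. Qed.
Lemma Cexpi_add a b : Cexpi (a + b) = Cmul (Cexpi a) (Cexpi b).
Proof. unfold Cexpi, Cmul; simpl; rewrite cos_plus, sin_plus; apply C_ext; simpl; ring. Qed.
Lemma Cexpi_0 : Cexpi 0 = C1.
Proof. unfold Cexpi, C1; rewrite cos_0, sin_0; reflexivity. Qed.
Lemma cn_Cexpi t : cn (Cexpi t) <= 2.
Proof. unfold cn, Cexpi; simpl.
  pose proof (COS_bound t); pose proof (SIN_bound t).
  unfold Rabs; destruct (Rcase_abs (cos t)), (Rcase_abs (sin t)); lra. Qed.

Lemma NoDup_map_inj' {T U} (f : T -> U) l : (forall x y, f x = f y -> x = y) -> NoDup l -> NoDup (map f l).
Proof. intros Hf Hl; induction Hl; simpl; constructor; auto.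
  intro Hin; apply in_map_iff in Hin as [y [Hy Hy']]. apply Hf in Hy; subst; auto. Qed.

Definition rs {T} (g : T -> R) (l : list T) : R := fold_right Rplus 0 (map g l).

Lemma rs_nil {T} (g : T -> R) : rs g [] = 0. Proof. reflexivity. Qed.
Lemma rs_cons {T} (g : T -> R) a l : rs g (a :: l) = g a + rs g l. Proof. reflexivity. Qed.
Lemma rs_app {T} (g : T -> R) l1 l2 : rs g (l1 ++ l2) = rs g l1 + rs g l2.
Proof. induction l1; unfold rs in *; simpl; [ring|]. rewrite IHl1; ring. Qed.
Lemma rs_ext {T} (g1 g2 : T -> R) l : (forall x, In x l -> g1 x = g2 x) -> rs g1 l = rs g2 l.
Proof. induction l; intros; rewrite ?rs_nil, ?rs_cons; auto. rewrite H by (left; auto).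
  rewrite IHl; auto. intros; apply H; right; auto. Qed.
Lemma rs_const0 {T} l : rs (fun _ : T => 0) l = 0.
Proof. induction l; auto. rewrite rs_cons, IHl; ring. Qed.
Lemma rs_le {T} (g1 g2 : T -> R) l : (forall x, In x l -> g1 x <= g2 x) -> rs g1 l <= rs g2 l.
Proof. induction l; intros; rewrite ?rs_nil, ?rs_cons; [lra|].
  pose proof (H a (or_introl eq_refl)). pose proof (IHl (fun x h => H x (or_intror h))). lra. Qed.
Lemma rs_ge0 {T} (g : T -> R) l : (forall x, In x l -> 0 <= g x) -> 0 <= rs g l.
Proof. induction l; intros; rewrite ?rs_nil, ?rs_cons; [lra|].
  pose proof (H a (or_introl eq_refl)). pose proof (IHl (fun x h => H x (or_intror h))). lra. Qed.
Lemma rs_plus {T} (g1 g2 : T -> R) l : rs (fun x => g1 x + g2 x) l = rs g1 l + rs g2 l.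
Proof. induction l; rewrite ?rs_nil, ?rs_cons; [ring|]. rewrite IHl; ring. Qed.
Lemma rs_scal {T} (g : T -> R) c l : rs (fun x => c * g x) l = c * rs g l.
Proof. induction l; rewrite ?rs_nil, ?rs_cons; [ring|]. rewrite IHl; ring. Qed.
Lemma rs_opp {T} (g : T -> R) l : rs (fun x => - g x) l = - rs g l.
Proof. induction l; rewrite ?rs_nil, ?rs_cons; [ring|]. rewrite IHl; ring. Qed.
Lemma rs_map {T U} (g : U -> R) (f : T -> U) l : rs g (map f l) = rs (fun x => g (f x)) l.
Proof. unfold rs; rewrite map_map; reflexivity. Qed.
Lemma rs_swap {T U} (g : T -> U -> R) l1 l2 :
  rs (fun x => rs (fun y => g x y) l2) l1 = rs (fun y => rs (fun x => g x y) l1) l2.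
Proof. induction l1.
  - rewrite rs_nil. symmetry. apply rs_const0.
  - rewrite rs_cons, IHl1. rewrite <- rs_plus. apply rs_ext; intros. rewrite rs_cons; ring. Qed.
Lemma rs_abs {T} (g : T -> R) l : Rabs (rs g l) <= rs (fun x => Rabs (g x)) l.
Proof. induction l. rewrite !rs_nil, Rabs_R0; lra.
  rewrite !rs_cons. pose proof (Rabs_triang (g a) (rs g l)); lra. Qed.
Lemma rs_flat_map {T U} (g : U -> R) (f : T -> list U) l :
  rs g (flat_map f l) = rs (fun x => rs g (f x)) l.
Proof. induction l; simpl; auto. rewrite rs_app, rs_cons, IHl; reflexivity. Qed.

Lemma Csum_fst {T} (f : T -> C) l : fst (Csum (map f l)) = rs (fun x => fst (f x)) l.
Proof. induction l; simpl; auto. rewrite rs_cons, <- IHl; reflexivity. Qed.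
Lemma Csum_snd {T} (f : T -> C) l : snd (Csum (map f l)) = rs (fun x => snd (f x)) l.
Proof. induction l; simpl; auto. rewrite rs_cons, <- IHl; reflexivity. Qed.
Lemma cn_Csum {T} (f : T -> C) l : cn (Csum (map f l)) <= rs (fun x => cn (f x)) l.
Proof. induction l; simpl. rewrite cn_C0, rs_nil; lra.
  rewrite rs_cons. pose proof (cn_add (f a) (Csum (map f l))); lra. Qed.

Section NoDupSums.
Context {T : Type} (eqd : forall x y : T, {x = y} + {x <> y}).

Lemma rs_incl_le (g : T -> R) l l' : (forall x, 0 <= g x) -> NoDup l -> NoDup l' -> incl l l' ->
  rs g l <= rs g l'.
Proof. revert l'; induction l; intros l' Hg Hl Hl' Hi.
  - simpl. apply rs_ge0; auto.
  - assert (In a l') by (apply Hi; left; auto).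
    apply in_split in H as [l1 [l2 ->]].
    rewrite rs_app, rs_cons. inversion Hl; subst.
    assert (rs g l <= rs g (l1 ++ l2)).
    { apply IHl; auto. eapply NoDup_remove_1; eauto.
      intros x Hx. assert (In x (l1 ++ a :: l2)) by (apply Hi; right; auto).
      apply in_app_or in H. apply in_or_app. destruct H as [H|[H|H]]; auto. subst; contradiction. }
    rewrite rs_app in H. rewrite rs_cons; lra. Qed.

Lemma rs_single (g : T -> R) x0 l : NoDup l -> In x0 l -> (forall x, x <> x0 -> g x = 0) ->
  rs g l = g x0.
Proof. intros Hl Hi Hg. apply in_split in Hi as [l1 [l2 ->]].
  rewrite rs_app, rs_cons.
  apply NoDup_remove_2 in Hl.
  rewrite (rs_ext g (fun _ => 0) l1), (rs_ext g (fun _ => 0) l2), !rs_const0; try ring;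
  intros x Hx; apply Hg; intro; subst; apply Hl; apply in_or_app; auto. Qed.

Lemma incl_nodup_app l1 l2 : incl l1 (nodup eqd (l1 ++ l2)) /\ incl l2 (nodup eqd (l1 ++ l2)).
Proof. split; intros x Hx; apply nodup_In; apply in_or_app; auto. Qed.

End NoDupSums.

Lemma Rabs_le_inv a b : Rabs a <= b -> - b <= a <= b.
Proof. intros H; pose proof (Rle_abs a); pose proof (Rle_abs (-a)); rewrite Rabs_Ropp in *; lra. Qed.

Lemma NoDup_flat_map' {T U} (f : T -> list U) l : NoDup l -> (forall x, In x l -> NoDup (f x)) ->
  (forall x y z, In x l -> In y l -> x <> y -> In z (f x) -> ~ In z (f y)) -> NoDup (flat_map f l).
Proof. induction 1 as [|a l Ha Hl IH]; intros Hf Hd; simpl; [constructor|].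
  apply NoDup_app. apply Hf; left; auto. apply IH; auto. intros; apply Hf; right; auto.
  intros x y z H1 H2 H3 H4; apply (Hd x y z); auto; right; auto.
  intros z Hz Hz'. apply in_flat_map in Hz' as [y [Hy Hzy]].
  apply (Hd a y z); auto. left; auto. right; auto. intro; subst; contradiction. Qed.

Lemma NoDup_list_prod' {T U} (l1 : list T) (l2 : list U) : NoDup l1 -> NoDup l2 -> NoDup (list_prod l1 l2).
Proof. intros H1 H2. assert (E : list_prod l1 l2 = flat_map (fun x => map (fun y => (x, y)) l2) l1)
  by (clear; induction l1; simpl; auto; rewrite IHl1; auto). rewrite E.
  apply NoDup_flat_map'; auto.
  - intros. apply NoDup_map_inj'; auto. intros a b Eab; inversion Eab; auto.
  - intros x y z _ _ Hxy Hz Hz'. apply in_map_iff in Hz as [a [<- _]]. apply in_map_iff in Hz' as [b [Eb _]].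
    inversion Eb; auto. Qed.

Lemma rs_le_len {T} (g : T -> R) l e : (forall x, In x l -> g x <= e) -> rs g l <= INR (length l) * e.
Proof. induction l; intros H. rewrite rs_nil; simpl; lra.
  rewrite rs_cons; simpl length; rewrite S_INR.
  pose proof (H a (or_introl eq_refl)). pose proof (IHl (fun x h => H x (or_intror h))). lra. Qed.

Lemma NoDup_map_inj {T U} (f : T -> U) l : (forall x y, f x = f y -> x = y) -> NoDup l -> NoDup (map f l).
Proof. intros Hf Hl; induction Hl; simpl; constructor; auto.
  intro Hin; apply in_map_iff in Hin as [y [Hy Hy']]. apply Hf in Hy; subst; auto. Qed.

Class EqDec (T : Type) := eqd : forall x y : T, {x = y} + {x <> y}.

Section Summ.
Context {T : Type} {EqT : EqDec T}.

Definition hasSR (g : T -> R) (s : R) : Prop :=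
  forall eps, 0 < eps -> exists l0, NoDup l0 /\
    forall l, NoDup l -> incl l0 l -> Rabs (rs g l - s) <= eps.
Definition bndR (g : T -> R) (M : R) := forall l, NoDup l -> rs (fun x => Rabs (g x)) l <= M.

Lemma nd_union l1 l2 : NoDup (nodup eqd (l1 ++ l2)) /\ incl l1 (nodup eqd (l1 ++ l2))
   /\ incl l2 (nodup eqd (l1 ++ l2)).
Proof. split; [apply NoDup_nodup|]. apply incl_nodup_app. Qed.

Lemma hasSR_unique g s1 s2 : hasSR g s1 -> hasSR g s2 -> s1 = s2.
Proof. intros H1 H2. apply Rle_antisym; apply Rnot_lt_le; intro Hlt.
  - destruct (H1 ((s1 - s2)/3)) as [l1 [N1 P1]]; [lra|].
    destruct (H2 ((s1 - s2)/3)) as [l2 [N2 P2]]; [lra|].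
    destruct (nd_union l1 l2) as [Nd [I1 I2]].
    specialize (P1 _ Nd I1); specialize (P2 _ Nd I2).
    apply Rabs_le_inv in P1; apply Rabs_le_inv in P2; lra.
  - destruct (H1 ((s2 - s1)/3)) as [l1 [N1 P1]]; [lra|].
    destruct (H2 ((s2 - s1)/3)) as [l2 [N2 P2]]; [lra|].
    destruct (nd_union l1 l2) as [Nd [I1 I2]].
    specialize (P1 _ Nd I1); specialize (P2 _ Nd I2).
    apply Rabs_le_inv in P1; apply Rabs_le_inv in P2; lra. Qed.

Lemma hasSR_ext g1 g2 s : (forall x, g1 x = g2 x) -> hasSR g1 s -> hasSR g2 s.
Proof. intros He H eps He'. destruct (H eps He') as [l0 [N P]]. exists l0; split; auto.
  intros; rewrite <- (rs_ext g1 g2); auto. Qed.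

Lemma hasSR_lin a b g1 g2 s1 s2 : hasSR g1 s1 -> hasSR g2 s2 ->
  hasSR (fun x => a * g1 x + b * g2 x) (a * s1 + b * s2).
Proof. intros H1 H2 eps He.
  set (e := eps / (2 * (Rabs a + Rabs b + 1))).
  assert (Hd : 0 < 2 * (Rabs a + Rabs b + 1)) by (pose proof (Rabs_pos a); pose proof (Rabs_pos b); lra).
  assert (He0 : 0 < e) by (unfold e; apply Rdiv_lt_0_compat; lra).
  destruct (H1 e He0) as [l1 [N1 P1]]; destruct (H2 e He0) as [l2 [N2 P2]].
  destruct (nd_union l1 l2) as [Nd [I1 I2]].
  exists (nodup eqd (l1 ++ l2)); split; auto. intros l Hl Hi.
  specialize (P1 l Hl (incl_tran I1 Hi)); specialize (P2 l Hl (incl_tran I2 Hi)).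
  rewrite rs_plus, rs_scal, rs_scal.
  replace (a * rs g1 l + b * rs g2 l - (a * s1 + b * s2)) with (a * (rs g1 l - s1) + b * (rs g2 l - s2)) by ring.
  eapply Rle_trans; [apply Rabs_triang|]. rewrite !Rabs_mult.
  assert (Rabs a * Rabs (rs g1 l - s1) <= Rabs a * e) by (apply Rmult_le_compat_l; auto; apply Rabs_pos).
  assert (Rabs b * Rabs (rs g2 l - s2) <= Rabs b * e) by (apply Rmult_le_compat_l; auto; apply Rabs_pos).
  assert ((Rabs a + Rabs b) * e <= eps).
  { unfold e. apply (Rmult_le_reg_r (2 * (Rabs a + Rabs b + 1))); auto.
    field_simplify; [|lra]. pose proof (Rabs_pos a); pose proof (Rabs_pos b); nra. }
  lra. Qed.

Lemma hasSR_add g1 g2 s1 s2 : hasSR g1 s1 -> hasSR g2 s2 -> hasSR (fun x => g1 x + g2 x) (s1 + s2).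
Proof. intros H1 H2. pose proof (hasSR_lin 1 1 _ _ _ _ H1 H2).
  replace (s1 + s2) with (1 * s1 + 1 * s2) by ring. eapply hasSR_ext; [|eauto]. intros; simpl; ring. Qed.
Lemma hasSR_scal c g s : hasSR g s -> hasSR (fun x => c * g x) (c * s).
Proof. intros H. pose proof (hasSR_lin c 0 _ _ _ _ H H).
  replace (c * s) with (c * s + 0 * s) by ring. eapply hasSR_ext; [|eauto]. intros; simpl; ring. Qed.
Lemma hasSR_sub g1 g2 s1 s2 : hasSR g1 s1 -> hasSR g2 s2 -> hasSR (fun x => g1 x - g2 x) (s1 - s2).
Proof. intros H1 H2. pose proof (hasSR_lin 1 (-1) _ _ _ _ H1 H2).
  replace (s1 - s2) with (1 * s1 + -1 * s2) by ring. eapply hasSR_ext; [|eauto]. intros; simpl; ring. Qed.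

Lemma hasSR_ge0 g s : hasSR g s -> (forall x, 0 <= g x) -> 0 <= s.
Proof. intros H Hg. apply Rnot_lt_le; intro Hs.
  destruct (H (- s / 2)) as [l0 [N P]]; [lra|]. specialize (P l0 N (incl_refl _)).
  pose proof (rs_ge0 g l0 (fun x _ => Hg x)). apply Rabs_le_inv in P; lra. Qed.

Lemma hasSR_mono g1 g2 s1 s2 : hasSR g1 s1 -> hasSR g2 s2 -> (forall x, g1 x <= g2 x) -> s1 <= s2.
Proof. intros H1 H2 Hle. pose proof (hasSR_ge0 _ _ (hasSR_sub _ _ _ _ H2 H1)). 
  assert (0 <= s2 - s1) by (apply H; intros; specialize (Hle x); lra). lra. Qed.

Lemma hasSR_bound g s M : hasSR g s -> bndR g M -> Rabs s <= M.
Proof. intros H Hb. apply Rnot_lt_le; intro Hs.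
  destruct (H ((Rabs s - M) / 2)) as [l0 [N P]]; [lra|]. specialize (P l0 N (incl_refl _)).
  specialize (Hb l0 N). pose proof (rs_abs g l0).
  pose proof (Rabs_triang_inv s (rs g l0)). rewrite Rabs_minus_sym in P. lra. Qed.

Lemma hasSR_nonneg_ex g M : (forall x, 0 <= g x) -> (forall l, NoDup l -> rs g l <= M) ->
  exists s, hasSR g s.
Proof. intros Hg Hb.
  set (E := fun r => exists l, NoDup l /\ r = rs g l).
  assert (HE : bound E) by (exists M; intros r [l [N ->]]; auto).
  assert (HE2 : exists x, E x) by (exists 0; exists []; split; [constructor|reflexivity]).
  destruct (completeness E HE HE2) as [m [Hub Hlub]].
  exists m. intros eps He.
  destruct (classic (exists l0, NoDup l0 /\ m - eps < rs g l0)) as [[l0 [N P]]|Hn].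
  - exists l0; split; auto. intros l Hl Hi.
    assert (rs g l0 <= rs g l) by (apply rs_incl_le; auto).
    assert (rs g l <= m) by (apply Hub; exists l; auto).
    apply Rabs_le; lra.
  - exfalso. assert (m <= m - eps); [|lra]. apply Hlub. intros r [l [N ->]].
    apply Rnot_lt_le; intro; apply Hn; exists l; auto. Qed.

Lemma hasSR_ex g M : bndR g M -> exists s, hasSR g s /\ Rabs s <= M.
Proof. intros Hb.
  destruct (hasSR_nonneg_ex (fun x => (Rabs (g x) + g x) / 2) M) as [sp Hp].
  { intros; pose proof (Rabs_pos (g x)); pose proof (Rle_abs (- g x)); rewrite Rabs_Ropp in *; lra. }
  { intros l N. eapply Rle_trans; [|apply (Hb l N)]. apply rs_le; intros.
    pose proof (Rle_abs (g x)); lra. }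
  destruct (hasSR_nonneg_ex (fun x => (Rabs (g x) - g x) / 2) M) as [sm Hm].
  { intros; pose proof (Rabs_pos (g x)); pose proof (Rle_abs (g x)); lra. }
  { intros l N. eapply Rle_trans; [|apply (Hb l N)]. apply rs_le; intros.
    pose proof (Rle_abs (- g x)); rewrite Rabs_Ropp in *; lra. }
  exists (sp - sm). assert (H : hasSR g (sp - sm)).
  { eapply hasSR_ext; [|apply (hasSR_sub _ _ _ _ Hp Hm)]. intros; simpl; field. }
  split; auto. eapply hasSR_bound; eauto. Qed.

Lemma hasSR_single g x0 : (forall x, x <> x0 -> g x = 0) -> hasSR g (g x0).
Proof. intros Hg eps He. exists [x0]; split; [repeat constructor; auto|].
  intros l Hl Hi. rewrite (rs_single g x0 l); auto. rewrite Rminus_diag, Rabs_R0; lra.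
  apply Hi; left; auto. Qed.

Lemma hasSR_zero : hasSR (fun _ => 0) 0.
Proof. intros eps He; exists []; split; [constructor|]. intros; rewrite rs_const0, Rminus_diag, Rabs_R0; lra. Qed.

Lemma hasSR_rs {I} (g : I -> T -> R) (s : I -> R) (L : list I) :
  (forall i, In i L -> hasSR (g i) (s i)) -> hasSR (fun x => rs (fun i => g i x) L) (rs s L).
Proof. induction L; intros H.
  - eapply hasSR_ext; [|apply hasSR_zero]. intros; rewrite rs_nil; auto.
  - rewrite rs_cons. eapply hasSR_ext; [|apply hasSR_add; [apply H; left; auto|apply IHL; intros; apply H; right; auto]].
    intros; rewrite rs_cons; auto. Qed.

Lemma common_list {I} (P : I -> list T -> Prop) (L : list I) (B : list T) :
  (forall i, In i L -> exists l0, NoDup l0 /\ forall l, NoDup l -> incl l0 l -> P i l) ->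
  exists Y, NoDup Y /\ incl B Y /\ forall i, In i L -> forall l, NoDup l -> incl Y l -> P i l.
Proof. revert B; induction L; intros B H.
  - exists (nodup eqd B). split; [apply NoDup_nodup|]. split; [intros x Hx; apply nodup_In; auto|].
    intros i [].
  - destruct (H a (or_introl eq_refl)) as [l0 [N0 P0]].
    destruct (IHL (B ++ l0)) as [Y [NY [IY PY]]]; [intros; apply H; right; auto|].
    exists Y; split; auto; split. intros x Hx; apply IY, in_or_app; auto.
    intros i [<-|Hi] l Hl Hl'. apply P0; auto. intros x Hx; apply Hl', IY, in_or_app; auto.
    apply PY; auto. Qed.

Lemma hasSR_exhaust g s (L : nat -> list T) : hasSR g s -> (forall N, NoDup (L N)) ->
  (forall x, exists N0, forall N, (N0 <= N)%nat -> In x (L N)) ->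
  Un_cv (fun N => rs g (L N)) s.
Proof. intros H HN Hx eps He. destruct (H (eps/2)) as [l0 [N0 P0]]; [lra|].
  assert (exists K, forall N, (K <= N)%nat -> incl l0 (L N)).
  { clear P0 N0. induction l0. exists 0%nat; intros N _ x [].
    destruct IHl0 as [K1 HK1]. destruct (Hx a) as [K2 HK2].
    exists (max K1 K2). intros N HN' x [<-|Hin]. apply HK2; lia. apply (HK1 N); auto; lia. }
  destruct H0 as [K HK]. exists K. intros n Hn. unfold R_dist.
  specialize (P0 (L n) (HN n) (HK n ltac:(lia))). lra. Qed.

Lemma bndR_mono g M M' : bndR g M -> M <= M' -> bndR g M'.
Proof. intros H Hm l Hl; specialize (H l Hl); lra. Qed.

End Summ.

Lemma hasSR_reindex {T U} {ET : EqDec T} {EU : EqDec U}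
  (tau : U -> T) (iota : T -> U) (g : T -> R) s :
  (forall x, tau (iota x) = x) -> (forall y, iota (tau y) = y) ->
  hasSR g s -> hasSR (fun y => g (tau y)) s.
Proof. intros H1 H2 H eps He. destruct (H eps He) as [l0 [N P]].
  exists (map iota l0). split.
  - apply NoDup_map_inj; auto. intros x y E. rewrite <- (H1 x), <- (H1 y), E; auto.
  - intros l Hl Hi. rewrite <- rs_map. apply P.
    apply NoDup_map_inj; auto. intros x y E. rewrite <- (H2 x), <- (H2 y), E; auto.
    intros x Hx. apply in_map_iff. exists (iota x); split; auto. apply Hi, in_map; auto. Qed.

Lemma rs_list_prod {T U} (g : T * U -> R) l1 l2 :
  rs g (list_prod l1 l2) = rs (fun x => rs (fun y => g (x, y)) l2) l1.
Proof. induction l1; simpl; auto. rewrite rs_app, rs_cons, IHl1, rs_map; reflexivity. Qed.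

Lemma hasSR_fubini {T U} {ET : EqDec T} {EU : EqDec U}
  (g : T * U -> R) (G : T -> R) s :
  hasSR g s -> (forall x, hasSR (fun y => g (x, y)) (G x)) -> hasSR G s.
Proof. intros H HG eps He.
  destruct (H (eps/2)) as [l0 [N0 P0]]; [lra|].
  exists (nodup eqd (map fst l0)). split; [apply NoDup_nodup|].
  intros l Hl Hi.
  set (e := eps / (2 * (INR (length l) + 1))).
  assert (He0 : 0 < e) by (unfold e; apply Rdiv_lt_0_compat; [lra|]; pose proof (pos_INR (length l)); lra).
  destruct (common_list (fun x Y => Rabs (rs (fun y => g (x, y)) Y - G x) <= e) l (map snd l0))
    as [Y [NY [IY PY]]].
  { intros x _. apply (HG x e He0). }
  assert (Hprod : Rabs (rs g (list_prod l Y) - s) <= eps / 2).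
  { apply P0. apply NoDup_list_prod'; auto.
    intros [x y] Hxy. apply in_prod. apply Hi. apply nodup_In. apply in_map_iff; exists (x,y); auto.
    apply IY. apply in_map_iff; exists (x, y); auto. }
  rewrite rs_list_prod in Hprod.
  assert (Rabs (rs (fun x => rs (fun y => g (x, y)) Y) l - rs G l) <= INR (length l) * e).
  { unfold Rminus; rewrite <- (rs_opp G), <- rs_plus. eapply Rle_trans; [apply rs_abs|].
    apply rs_le_len. intros x Hx. apply PY; auto. apply incl_refl. }
  assert (INR (length l) * e <= eps / 2).
  { unfold e. pose proof (pos_INR (length l)).
    apply (Rmult_le_reg_r (2 * (INR (length l) + 1))); [lra|]. field_simplify; lra. }
  apply Rabs_le_inv in Hprod. apply Rabs_le_inv in H0. apply Rabs_le. lra. Qed.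

Section CSumm.
Context {T : Type} {EqT : EqDec T}.

Definition hasS (f : T -> C) (s : C) : Prop :=
  hasSR (fun x => fst (f x)) (fst s) /\ hasSR (fun x => snd (f x)) (snd s).
Definition bnd (f : T -> C) (M : R) := forall l, NoDup l -> rs (fun x => cn (f x)) l <= M.

Lemma hasS_unique f s1 s2 : hasS f s1 -> hasS f s2 -> s1 = s2.
Proof. intros [A B] [A' B']. apply C_ext; eapply hasSR_unique; eauto. Qed.

Lemma hasS_ext f1 f2 s : (forall x, f1 x = f2 x) -> hasS f1 s -> hasS f2 s.
Proof. intros E [A B]; split; eapply hasSR_ext; eauto; intros; simpl; rewrite E; auto. Qed.

Lemma hasS_eq f s1 s2 : s1 = s2 -> hasS f s1 -> hasS f s2.
Proof. intros ->; auto. Qed.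

Lemma sgn_ex (r : R) : exists e, (e = 1 \/ e = -1) /\ e * r = Rabs r.
Proof. destruct (Rcase_abs r). exists (-1); split; auto. rewrite Rabs_left; auto; ring.
  exists 1; split; auto. rewrite Rabs_right; auto; ring. Qed.

Lemma hasS_bound f s M : hasS f s -> bnd f M -> cn s <= M.
Proof. intros [A B] Hb.
  destruct (sgn_ex (fst s)) as [e1 [He1 E1]]; destruct (sgn_ex (snd s)) as [e2 [He2 E2]].
  pose proof (hasSR_lin e1 e2 _ _ _ _ A B) as H.
  pose proof (hasSR_bound _ _ M H) as Hb'.
  unfold cn. rewrite <- E1, <- E2. eapply Rle_trans; [apply Rle_abs|]. apply Hb'.
  intros l Hl. eapply Rle_trans; [|apply (Hb l Hl)]. apply rs_le; intros x _.
  unfold cn. eapply Rle_trans; [apply Rabs_triang|]. rewrite !Rabs_mult.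
  assert (Rabs (-1) = 1) by (unfold Rabs; destruct Rcase_abs; lra).
  destruct He1 as [->| ->]; destruct He2 as [->| ->]; rewrite ?Rabs_R1, ?H0; lra. Qed.

Lemma hasS_ex f M : bnd f M -> exists s, hasS f s.
Proof. intros Hb.
  destruct (hasSR_ex (fun x => fst (f x)) M) as [s1 [H1 _]].
  { intros l Hl; eapply Rle_trans; [|apply (Hb l Hl)]; apply rs_le; intros; apply cn_le_fst. }
  destruct (hasSR_ex (fun x => snd (f x)) M) as [s2 [H2 _]].
  { intros l Hl; eapply Rle_trans; [|apply (Hb l Hl)]; apply rs_le; intros; apply cn_le_snd. }
  exists (s1, s2); split; auto. Qed.

Lemma hasS_add f g s t : hasS f s -> hasS g t -> hasS (fun x => Cadd (f x) (g x)) (Cadd s t).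
Proof. intros [A B] [A' B']; split; simpl; [apply (hasSR_add _ _ _ _ A A')|apply (hasSR_add _ _ _ _ B B')]. Qed.

Lemma hasS_mulc c f s : hasS f s -> hasS (fun x => Cmul c (f x)) (Cmul c s).
Proof. intros [A B]. split.
  - apply (hasSR_ext (fun x => fst c * fst (f x) + - snd c * snd (f x))).
    intros; unfold Cmul; simpl; ring.
    replace (fst (Cmul c s)) with (fst c * fst s + - snd c * snd s) by (unfold Cmul; simpl; ring).
    apply hasSR_lin; auto.
  - apply (hasSR_ext (fun x => fst c * snd (f x) + snd c * fst (f x))).
    intros; unfold Cmul; simpl; ring.
    replace (snd (Cmul c s)) with (fst c * snd s + snd c * fst s) by (unfold Cmul; simpl; ring).
    apply hasSR_lin; auto. Qed.

Lemma hasS_cmul c f s : hasS f s -> hasS (fun x => Cmul (f x) c) (Cmul s c).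
Proof. intros H. eapply hasS_ext; [|eapply hasS_eq; [|apply (hasS_mulc c _ _ H)]].
  intros; simpl; Cring. Cring. Qed.

Lemma hasS_scal r f s : hasS f s -> hasS (fun x => Cscal r (f x)) (Cscal r s).
Proof. intros H. eapply hasS_ext; [|eapply hasS_eq; [|apply (hasS_mulc (r, 0) _ _ H)]].
  intros; simpl; Cring. Cring. Qed.

Lemma hasS_opp f s : hasS f s -> hasS (fun x => Copp (f x)) (Copp s).
Proof. intros H. eapply hasS_ext; [|eapply hasS_eq; [|apply (hasS_mulc (-1, 0) _ _ H)]].
  intros; simpl; Cring. Cring. Qed.

Lemma hasS_sub f g s t : hasS f s -> hasS g t -> hasS (fun x => Csub (f x) (g x)) (Csub s t).
Proof. intros A B. apply hasS_add; auto. apply hasS_opp; auto. Qed.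

Lemma hasS_zero : hasS (fun _ => C0) C0.
Proof. split; apply (hasSR_ext (fun _ => 0)); try (intros; reflexivity); apply hasSR_zero. Qed.

Lemma hasS_single f x0 : (forall x, x <> x0 -> f x = C0) -> hasS f (f x0).
Proof. intros H; split; [apply (hasSR_single (fun x => fst (f x)) x0)|apply (hasSR_single (fun x => snd (f x)) x0)];
  intros x Hx; rewrite H; auto. Qed.

Lemma hasS_cn_le f s g t : hasS f s -> hasSR g t -> (forall x, cn (f x) <= g x) -> cn s <= t.
Proof. intros [A B] Hg Hle.
  destruct (sgn_ex (fst s)) as [e1 [He1 E1]]; destruct (sgn_ex (snd s)) as [e2 [He2 E2]].
  pose proof (hasSR_lin e1 e2 _ _ _ _ A B) as H.
  unfold cn. rewrite <- E1, <- E2. eapply hasSR_mono; eauto. intros x.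
  eapply Rle_trans; [|apply Hle]. eapply Rle_trans; [apply Rle_abs|]. unfold cn.
  eapply Rle_trans; [apply Rabs_triang|]. rewrite !Rabs_mult.
  assert (Rabs (-1) = 1) by (unfold Rabs; destruct Rcase_abs; lra).
  destruct He1 as [->| ->]; destruct He2 as [->| ->]; rewrite ?Rabs_R1, ?H0; lra. Qed.

Lemma hasS_Csum {I} (f : I -> T -> C) (s : I -> C) (L : list I) :
  (forall i, In i L -> hasS (f i) (s i)) -> hasS (fun x => Csum (map (fun i => f i x) L)) (Csum (map s L)).
Proof. induction L; intros H; simpl.
  - apply hasS_zero.
  - apply hasS_add. apply H; left; auto. apply IHL; intros; apply H; right; auto. Qed.

Lemma hasS_exhaust f s (L : nat -> list T) : hasS f s -> (forall N, NoDup (L N)) ->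
  (forall x, exists N0, forall N, (N0 <= N)%nat -> In x (L N)) ->
  Ccv (fun N => Csum (map f (L N))) s.
Proof. intros [A B] HN Hx. split.
  - eapply Un_cv_ext; [|apply (hasSR_exhaust _ _ L A HN Hx)]. intros; simpl; rewrite Csum_fst; auto.
  - eapply Un_cv_ext; [|apply (hasSR_exhaust _ _ L B HN Hx)]. intros; simpl; rewrite Csum_snd; auto. Qed.

End CSumm.

Lemma Clim_eq u l : Ccv u l -> Clim u = l.
Proof. intros H. unfold Clim.
  assert (H' : Ccv u (epsilon (inhabits C0) (fun l => Ccv u l))).
  { apply epsilon_spec; exists l; auto. }
  destruct H as [A B], H' as [A' B']. apply C_ext; eapply UL_sequence; eauto. Qed.

Lemma hasS_reindex {T U} {ET : EqDec T} {EU : EqDec U} (tau : U -> T) (iota : T -> U) (f : T -> C) s :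
  (forall x, tau (iota x) = x) -> (forall y, iota (tau y) = y) ->
  hasS f s -> hasS (fun y => f (tau y)) s.
Proof. intros H1 H2 [A B]; split.
  apply (hasSR_reindex tau iota (fun x => fst (f x))); auto.
  apply (hasSR_reindex tau iota (fun x => snd (f x))); auto. Qed.

Lemma hasS_fubini {T U} {ET : EqDec T} {EU : EqDec U} (g : T * U -> C) (G : T -> C) s :
  hasS g s -> (forall x, hasS (fun y => g (x, y)) (G x)) -> hasS G s.
Proof. intros [A B] HG. split.
  - apply (hasSR_fubini (fun p => fst (g p)) (fun x => fst (G x))); auto. intros x; apply HG.
  - apply (hasSR_fubini (fun p => snd (g p)) (fun x => snd (G x))); auto. intros x; apply HG. Qed.

#[export] Instance EqDec_Z4 : EqDec Z4.
Proof. intros [a b c d] [a' b' c' d'].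
  destruct (Z.eq_dec a a'), (Z.eq_dec b b'), (Z.eq_dec c c'), (Z.eq_dec d d'); subst;
  try (right; intro E; inversion E; contradiction). left; reflexivity. Defined.

#[export] Instance EqDec_prod {T U} {ET : EqDec T} {EU : EqDec U} : EqDec (T * U).
Proof. intros [a b] [a' b']. destruct (eqd a a'), (eqd b b'); subst;
  try (right; intro E; inversion E; contradiction). left; reflexivity. Defined.

Lemma Z4_eta n : n = mkZ4 (z1 n) (z2 n) (z3 n) (z4 n).
Proof. destruct n; reflexivity. Qed.

Lemma Z4_ext n m : z1 n = z1 m -> z2 n = z2 m -> z3 n = z3 m -> z4 n = z4 m -> n = m.
Proof. destruct n, m; simpl; intros; subst; reflexivity. Qed.

Definition prod4 (L1 L2 L3 L4 : list Z) : list Z4 :=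
  flat_map (fun a => flat_map (fun b => flat_map (fun c =>
    map (fun d => mkZ4 a b c d) L4) L3) L2) L1.

Lemma box_prod4 N : box N = prod4 (zrange N) (zrange N) (zrange N) (zrange N).
Proof. reflexivity. Qed.

Lemma in_prod4 L1 L2 L3 L4 n : In n (prod4 L1 L2 L3 L4) <->
  In (z1 n) L1 /\ In (z2 n) L2 /\ In (z3 n) L3 /\ In (z4 n) L4.
Proof. unfold prod4. rewrite in_flat_map. split.
  - intros [a [Ha H]]. rewrite in_flat_map in H. destruct H as [b [Hb H]].
    rewrite in_flat_map in H. destruct H as [c [Hc H]]. rewrite in_map_iff in H.
    destruct H as [d [<- Hd]]. simpl; auto.
  - intros [H1 [H2 [H3 H4]]]. exists (z1 n); split; auto. rewrite in_flat_map.
    exists (z2 n); split; auto. rewrite in_flat_map. exists (z3 n); split; auto.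
    rewrite in_map_iff. exists (z4 n); split; auto. symmetry; apply Z4_eta. Qed.

Lemma NoDup_prod4 L1 L2 L3 L4 : NoDup L1 -> NoDup L2 -> NoDup L3 -> NoDup L4 -> NoDup (prod4 L1 L2 L3 L4).
Proof. intros N1 N2 N3 N4. unfold prod4.
  apply NoDup_flat_map'; auto.
  - intros a _. apply NoDup_flat_map'; auto.
    + intros b _. apply NoDup_flat_map'; auto.
      * intros c _. apply NoDup_map_inj'; auto. intros x y E; inversion E; auto.
      * intros x y z _ _ Hxy Hx Hy. apply in_map_iff in Hx as [d [<- _]].
        apply in_map_iff in Hy as [d' [E _]]. inversion E; auto.
    + intros x y z _ _ Hxy Hx Hy. apply in_flat_map in Hx as [c [_ Hx]].
      apply in_map_iff in Hx as [d [<- _]].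
      apply in_flat_map in Hy as [c' [_ Hy]]. apply in_map_iff in Hy as [d' [E _]]. inversion E; auto.
  - intros x y z _ _ Hxy Hx Hy. apply in_flat_map in Hx as [b [_ Hx]].
    apply in_flat_map in Hx as [c [_ Hx]]. apply in_map_iff in Hx as [d [<- _]].
    apply in_flat_map in Hy as [b' [_ Hy]].
    apply in_flat_map in Hy as [c' [_ Hy]]. apply in_map_iff in Hy as [d' [E _]]. inversion E; auto. Qed.

Lemma in_zrange N z : In z (zrange N) <-> (- Z.of_nat N <= z <= Z.of_nat N)%Z.
Proof. unfold zrange. rewrite in_map_iff. split.
  - intros [k [<- Hk]]. apply in_seq in Hk. lia.
  - intros H. exists (Z.to_nat (z + Z.of_nat N)). split. lia. apply in_seq. lia. Qed.

Lemma NoDup_zrange N : NoDup (zrange N).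
Proof. unfold zrange. apply NoDup_map_inj'. intros x y E; lia. apply seq_NoDup. Qed.

Lemma NoDup_box N : NoDup (box N).
Proof. rewrite box_prod4; apply NoDup_prod4; apply NoDup_zrange. Qed.

Lemma box_exhaust n : exists N0, forall N, (N0 <= N)%nat -> In n (box N).
Proof. exists (Z.to_nat (Z.abs (z1 n) + Z.abs (z2 n) + Z.abs (z3 n) + Z.abs (z4 n))).
  intros N HN. rewrite box_prod4, in_prod4, !in_zrange. lia. Qed.

Lemma box_Ccv f s : hasS f s -> Ccv (fun N => Csum (map f (box N))) s.
Proof. intros H. apply hasS_exhaust; auto. apply NoDup_box. apply box_exhaust. Qed.

Lemma box_Clim f s : hasS f s -> Clim (fun N => Csum (map f (box N))) = s.
Proof. intros H. apply Clim_eq, box_Ccv, H. Qed.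

Definition SR {T} (g : T -> R) : R := epsilon (inhabits 0) (fun s => hasSR g s).
Lemma SR_spec {T} {ET : EqDec T} (g : T -> R) : (exists s, hasSR g s) -> hasSR g (SR g).
Proof. intros H; unfold SR; apply epsilon_spec; auto. Qed.

Definition Z4add (n m : Z4) : Z4 := mkZ4 (z1 n + z1 m) (z2 n + z2 m) (z3 n + z3 m) (z4 n + z4 m).

Section Alg.
Variable theta : nat -> nat -> R.
Notation ph := (phase theta).

Definition tm (a b : NCT) (n m : Z4) : C := Cmul (Cmul (a m) (b (Z4sub n m))) (ph m (Z4sub n m)).
Definition L1 (a : NCT) := exists M, @bnd Z4 a M.

Lemma cn_phase m k : cn (ph m k) <= 2.
Proof. apply cn_Cexpi. Qed.

Lemma bnd_pt (a : NCT) M n : bnd a M -> cn (a n) <= M.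
Proof. intros H. specialize (H [n] ltac:(repeat constructor; auto)). rewrite rs_cons, rs_nil in H; lra. Qed.
Lemma bnd_ge0 (a : NCT) M : bnd a M -> 0 <= M.
Proof. intros H. specialize (H [] ltac:(constructor)). rewrite rs_nil in H; lra. Qed.
Lemma bnd_mono {T} (a : T -> C) M M' : bnd a M -> M <= M' -> bnd a M'.
Proof. intros H Hm l Hl; specialize (H l Hl); lra. Qed.

Lemma rs_shift (g : Z4 -> R) l m M : NoDup l -> (forall L, NoDup L -> rs g L <= M) ->
  rs (fun n => g (Z4sub n m)) l <= M.
Proof. intros Hl H. rewrite <- (rs_map g). apply H. apply NoDup_map_inj'; auto.
  intros x y E. pose proof (f_equal z1 E); pose proof (f_equal z2 E); pose proof (f_equal z3 E);
  pose proof (f_equal z4 E); simpl in *; apply Z4_ext; lia. Qed.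

Lemma cn_mul3 x y z : cn (Cmul (Cmul x y) z) <= cn x * cn y * cn z.
Proof. eapply Rle_trans; [apply cn_mul|]. apply Rmult_le_compat_r; [apply cn_ge0|apply cn_mul]. Qed.

Lemma cn_tm a b n m : cn (tm a b n m) <= 2 * (cn (a m) * cn (b (Z4sub n m))).
Proof. unfold tm. eapply Rle_trans; [apply cn_mul3|].
  pose proof (cn_phase m (Z4sub n m)). pose proof (cn_ge0 (a m)); pose proof (cn_ge0 (b (Z4sub n m))).
  pose proof (Rmult_le_pos _ _ H0 H1). nra. Qed.

Lemma rs_prod_bnd a b Ma Mb n L : bnd a Ma -> bnd b Mb -> NoDup L ->
  rs (fun m => cn (a m) * cn (b (Z4sub n m))) L <= Ma * Mb.
Proof. intros Ha Hb HL.
  apply Rle_trans with (rs (fun m => Mb * cn (a m)) L).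
  { apply rs_le; intros m _. pose proof (bnd_pt b Mb (Z4sub n m) Hb); pose proof (cn_ge0 (a m)). nra. }
  rewrite rs_scal. pose proof (Ha L HL). pose proof (bnd_ge0 b Mb Hb). 
  rewrite Rmult_comm. apply Rmult_le_compat_r; lra. Qed.

Lemma tm_bnd a b Ma Mb n : bnd a Ma -> bnd b Mb -> bnd (tm a b n) (2 * Ma * Mb).
Proof. intros Ha Hb l Hl.
  apply Rle_trans with (rs (fun m => 2 * (cn (a m) * cn (b (Z4sub n m)))) l).
  { apply rs_le; intros m _. apply cn_tm. }
  rewrite rs_scal. pose proof (rs_prod_bnd a b Ma Mb n l Ha Hb Hl). lra. Qed.

Lemma mul_hasS a b Ma Mb n : bnd a Ma -> bnd b Mb -> hasS (tm a b n) (mul theta a b n).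
Proof. intros Ha Hb. destruct (hasS_ex _ _ (tm_bnd a b Ma Mb n Ha Hb)) as [s Hs].
  unfold mul. fold (tm a b n). rewrite (box_Clim _ _ Hs). auto. Qed.

Lemma mul_eq a b Ma Mb n s : bnd a Ma -> bnd b Mb -> hasS (tm a b n) s -> mul theta a b n = s.
Proof. intros Ha Hb H. eapply hasS_unique; [apply (mul_hasS a b Ma Mb n Ha Hb)|auto]. Qed.

Lemma mul_bnd a b Ma Mb : bnd a Ma -> bnd b Mb -> bnd (mul theta a b) (2 * Ma * Mb).
Proof. intros Ha Hb l Hl.
  set (g := fun n m => 2 * (cn (a m) * cn (b (Z4sub n m)))).
  assert (Hg0 : forall n m, 0 <= g n m).
  { intros; unfold g. pose proof (cn_ge0 (a m)); pose proof (cn_ge0 (b (Z4sub n m))). nra. }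
  assert (Hg : forall n, hasSR (g n) (SR (g n))).
  { intros n. apply SR_spec. destruct (hasSR_ex (g n) (2 * Ma * Mb)) as [s [Hs _]]; eauto.
    intros L HL. rewrite (rs_ext _ (g n)) by (intros; rewrite Rabs_right; auto; apply Rle_ge; auto).
    unfold g; rewrite rs_scal. pose proof (rs_prod_bnd a b Ma Mb n L Ha Hb HL). lra. }
  apply Rle_trans with (rs (fun n => SR (g n)) l).
  { apply rs_le; intros n _. eapply hasS_cn_le; [apply (mul_hasS a b Ma Mb n Ha Hb)|apply Hg|].
    intros; apply cn_tm. }
  pose proof (hasSR_rs g (fun n => SR (g n)) l (fun i _ => Hg i)) as H.
  eapply Rle_trans; [apply Rle_abs|]. eapply hasSR_bound; [apply H|].
  intros L HL. rewrite (rs_ext _ (fun m => rs (fun n => g n m) l)).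
  2: { intros; rewrite Rabs_right; auto. apply Rle_ge, rs_ge0; auto. }
  apply Rle_trans with (rs (fun m => 2 * Mb * cn (a m)) L).
  { apply rs_le; intros m _. unfold g.
    rewrite (rs_ext _ (fun n => (2 * cn (a m)) * cn (b (Z4sub n m)))) by (intros; ring).
    rewrite rs_scal. pose proof (rs_shift (fun n => cn (b n)) l m Mb Hl Hb).
    pose proof (cn_ge0 (a m)). nra. }
  rewrite rs_scal. pose proof (Ha L HL). pose proof (bnd_ge0 b Mb Hb).
  replace (2 * Ma * Mb) with (2 * Mb * Ma) by ring. apply Rmult_le_compat_l; lra. Qed.

Lemma bnd_add (a b : NCT) Ma Mb : bnd a Ma -> bnd b Mb -> bnd (add a b) (Ma + Mb).
Proof. intros Ha Hb l Hl. apply Rle_trans with (rs (fun n => cn (a n) + cn (b n)) l).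
  apply rs_le; intros; apply cn_add. rewrite rs_plus; pose proof (Ha l Hl); pose proof (Hb l Hl); lra. Qed.
Lemma bnd_opp (a : NCT) Ma : bnd a Ma -> bnd (opp a) Ma.
Proof. intros Ha l Hl. unfold opp. rewrite (rs_ext _ (fun n => cn (a n))) by (intros; apply cn_opp). auto. Qed.
Lemma bnd_sub (a b : NCT) Ma Mb : bnd a Ma -> bnd b Mb -> bnd (sub a b) (Ma + Mb).
Proof. intros; apply bnd_add; auto; apply bnd_opp; auto. Qed.
Lemma bnd_scal (a : NCT) r Ma : bnd a Ma -> bnd (scal r a) (Rabs r * Ma).
Proof. intros Ha l Hl. unfold scal. rewrite (rs_ext _ (fun n => Rabs r * cn (a n))) by (intros; apply cn_scal).
  rewrite rs_scal. apply Rmult_le_compat_l; [apply Rabs_pos|auto]. Qed.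
Lemma bnd_zero : bnd (fun _ : Z4 => C0) 0.
Proof. intros l Hl. rewrite (rs_ext _ (fun _ => 0)) by (intros; apply cn_C0). rewrite rs_const0; lra. Qed.

Lemma mul_add_l a a' b Ma Ma' Mb : bnd a Ma -> bnd a' Ma' -> bnd b Mb ->
  mul theta (add a a') b = add (mul theta a b) (mul theta a' b).
Proof. intros Ha Ha' Hb. apply functional_extensionality; intros n.
  eapply mul_eq; [apply (bnd_add _ _ _ _ Ha Ha')|apply Hb|].
  eapply hasS_ext; [|apply hasS_add; [apply (mul_hasS a b Ma Mb n Ha Hb)|apply (mul_hasS a' b Ma' Mb n Ha' Hb)]].
  intros; unfold tm, add; Cring. Qed.
Lemma mul_add_r a b b' Ma Mb Mb' : bnd a Ma -> bnd b Mb -> bnd b' Mb' ->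
  mul theta a (add b b') = add (mul theta a b) (mul theta a b').
Proof. intros Ha Hb Hb'. apply functional_extensionality; intros n.
  eapply mul_eq; [apply Ha|apply (bnd_add _ _ _ _ Hb Hb')|].
  eapply hasS_ext; [|apply hasS_add; [apply (mul_hasS a b Ma Mb n Ha Hb)|apply (mul_hasS a b' Ma Mb' n Ha Hb')]].
  intros; unfold tm, add; Cring. Qed.
Lemma mul_scal_l r a b Ma Mb : bnd a Ma -> bnd b Mb -> mul theta (scal r a) b = scal r (mul theta a b).
Proof. intros Ha Hb. apply functional_extensionality; intros n.
  eapply mul_eq; [apply (bnd_scal _ r _ Ha)|apply Hb|].
  eapply hasS_ext; [|apply hasS_scal; apply (mul_hasS a b Ma Mb n Ha Hb)].
  intros; unfold tm, scal; Cring. Qed.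
Lemma mul_scal_r r a b Ma Mb : bnd a Ma -> bnd b Mb -> mul theta a (scal r b) = scal r (mul theta a b).
Proof. intros Ha Hb. apply functional_extensionality; intros n.
  eapply mul_eq; [apply Ha|apply (bnd_scal _ r _ Hb)|].
  eapply hasS_ext; [|apply hasS_scal; apply (mul_hasS a b Ma Mb n Ha Hb)].
  intros; unfold tm, scal; Cring. Qed.
Lemma mul_opp_l a b Ma Mb : bnd a Ma -> bnd b Mb -> mul theta (opp a) b = opp (mul theta a b).
Proof. intros Ha Hb. apply functional_extensionality; intros n.
  eapply mul_eq; [apply (bnd_opp _ _ Ha)|apply Hb|].
  eapply hasS_ext; [|apply hasS_opp; apply (mul_hasS a b Ma Mb n Ha Hb)].
  intros; unfold tm, opp; Cring. Qed.
Lemma mul_opp_r a b Ma Mb : bnd a Ma -> bnd b Mb -> mul theta a (opp b) = opp (mul theta a b).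
Proof. intros Ha Hb. apply functional_extensionality; intros n.
  eapply mul_eq; [apply Ha|apply (bnd_opp _ _ Hb)|].
  eapply hasS_ext; [|apply hasS_opp; apply (mul_hasS a b Ma Mb n Ha Hb)].
  intros; unfold tm, opp; Cring. Qed.
Lemma mul_sub_l a a' b Ma Ma' Mb : bnd a Ma -> bnd a' Ma' -> bnd b Mb ->
  mul theta (sub a a') b = sub (mul theta a b) (mul theta a' b).
Proof. intros. unfold sub. erewrite mul_add_l; eauto. erewrite mul_opp_l; eauto. apply bnd_opp; eauto. Qed.
Lemma mul_sub_r a b b' Ma Mb Mb' : bnd a Ma -> bnd b Mb -> bnd b' Mb' ->
  mul theta a (sub b b') = sub (mul theta a b) (mul theta a b').
Proof. intros. unfold sub. erewrite mul_add_r; eauto. erewrite mul_opp_r; eauto. apply bnd_opp; eauto. Qed.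
Lemma mul_zero_l b Mb : bnd b Mb -> mul theta (fun _ => C0) b = (fun _ => C0).
Proof. intros Hb. apply functional_extensionality; intros n.
  eapply mul_eq; [apply bnd_zero|apply Hb|]. eapply hasS_ext; [|apply hasS_zero]. intros; unfold tm; Cring. Qed.
Lemma mul_zero_r a Ma : bnd a Ma -> mul theta a (fun _ => C0) = (fun _ => C0).
Proof. intros Ha. apply functional_extensionality; intros n.
  eapply mul_eq; [apply Ha|apply bnd_zero|]. eapply hasS_ext; [|apply hasS_zero]. intros; unfold tm; Cring. Qed.

Lemma phase_assoc n k m : Cmul (ph m (Z4sub k m)) (ph k (Z4sub n k)) =
  Cmul (ph (Z4sub k m) (Z4sub n k)) (ph m (Z4sub n m)).
Proof. unfold phase. rewrite <- !Cexpi_add. f_equal. unfold pairs4; simpl. rewrite !minus_IZR. ring. Qed.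

Lemma phase_opp m : ph (Z4opp m) (Z4sub Z4zero (Z4opp m)) = ph m (Z4sub Z4zero m).
Proof. replace (Z4sub Z4zero (Z4opp m)) with m by (apply Z4_ext; simpl; lia).
  replace (Z4sub Z4zero m) with (Z4opp m) by (apply Z4_ext; simpl; lia).
  unfold phase. f_equal. unfold pairs4; simpl. rewrite !opp_IZR. ring. Qed.

Lemma phase_zero_r m : ph m Z4zero = C1.
Proof. unfold phase. rewrite <- Cexpi_0. f_equal. unfold pairs4; simpl. ring. Qed.
Lemma phase_zero_l m : ph Z4zero m = C1.
Proof. unfold phase. rewrite <- Cexpi_0. f_equal. unfold pairs4; simpl. ring. Qed.

Lemma one_spec x : one x = if eqd x Z4zero then C1 else C0.
Proof. unfold one. destruct (eqd x Z4zero) as [->|Hn]; [reflexivity|].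
  destruct x as [a b c d]; simpl.
  destruct (Z.eqb_spec a 0), (Z.eqb_spec b 0), (Z.eqb_spec c 0), (Z.eqb_spec d 0); simpl; auto.
  subst; exfalso; apply Hn; reflexivity. Qed.

Lemma bnd_one : bnd one 1.
Proof. intros l Hl. destruct (in_dec eqd Z4zero l) as [Hi|Hi].
  - rewrite (rs_single _ Z4zero l Hl Hi). rewrite one_spec; destruct (eqd Z4zero Z4zero); [|congruence].
    unfold cn, C1; simpl; rewrite Rabs_R1, Rabs_R0; lra.
    intros x Hx; rewrite one_spec; destruct (eqd x Z4zero); [contradiction|apply cn_C0].
  - rewrite (rs_ext _ (fun _ => 0)). rewrite rs_const0; lra.
    intros x Hx; rewrite one_spec; destruct (eqd x Z4zero); [subst; contradiction|apply cn_C0]. Qed.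

Lemma mul_one_r a Ma : bnd a Ma -> mul theta a one = a.
Proof. intros Ha. apply functional_extensionality; intros n.
  eapply mul_eq; [apply Ha|apply bnd_one|].
  replace (a n) with (tm a one n n).
  - apply hasS_single. intros m Hm. unfold tm. rewrite one_spec. destruct (eqd (Z4sub n m) Z4zero) as [E|].
    + exfalso; apply Hm. pose proof (f_equal z1 E); pose proof (f_equal z2 E); pose proof (f_equal z3 E);
      pose proof (f_equal z4 E); simpl in *; apply Z4_ext; lia.
    + Cring.
  - unfold tm. replace (Z4sub n n) with Z4zero by (apply Z4_ext; simpl; lia).
    rewrite phase_zero_r, one_spec. destruct (eqd Z4zero Z4zero); [|congruence]. Cring. Qed.

Lemma mul_one_l a Ma : bnd a Ma -> mul theta one a = a.
Proof. intros Ha. apply functional_extensionality; intros n.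
  eapply mul_eq; [apply bnd_one|apply Ha|].
  replace (a n) with (tm one a n Z4zero).
  - apply hasS_single. intros m Hm. unfold tm. rewrite one_spec. destruct (eqd m Z4zero) as [E|]; [contradiction|].
    Cring.
  - unfold tm. replace (Z4sub n Z4zero) with n by (apply Z4_ext; simpl; lia).
    rewrite phase_zero_l, one_spec. destruct (eqd Z4zero Z4zero); [|congruence]. Cring. Qed.

Lemma phi0_comm a b Ma Mb : bnd a Ma -> bnd b Mb -> phi0 (mul theta a b) = phi0 (mul theta b a).
Proof. intros Ha Hb. unfold phi0. symmetry. eapply mul_eq; [apply Hb|apply Ha|].
  assert (Hi : forall y, Z4opp (Z4opp y) = y) by (intros; apply Z4_ext; simpl; lia).
  eapply hasS_ext; [|apply (hasS_reindex Z4opp Z4opp _ _ Hi Hi (mul_hasS a b Ma Mb Z4zero Ha Hb))].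
  intros m. unfold tm. pose proof (phase_opp m) as E.
  replace (Z4sub Z4zero (Z4opp m)) with m in * by (apply Z4_ext; simpl; lia).
  replace (Z4sub Z4zero m) with (Z4opp m) in * by (apply Z4_ext; simpl; lia). rewrite E. Cring. Qed.

Lemma mul_assoc a b c Ma Mb Mc : bnd a Ma -> bnd b Mb -> bnd c Mc ->
  mul theta (mul theta a b) c = mul theta a (mul theta b c).
Proof. intros Ha Hb Hc. apply functional_extensionality; intros n.
  set (F2 := fun p : Z4 * Z4 => Cmul (Cmul (a (fst p)) (tm b c (Z4sub n (fst p)) (snd p))) (ph (fst p) (Z4sub n (fst p)))).
  assert (HF2 : bnd F2 (4 * Mc * (Ma * Mb))).
  { intros l Hl.
    set (L1 := nodup eqd (map fst l)). set (L2 := nodup eqd (map snd l)).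
    apply Rle_trans with (rs (fun p => cn (F2 p)) (list_prod L1 L2)).
    { apply rs_incl_le; [intros; apply cn_ge0|auto|apply NoDup_list_prod'; apply NoDup_nodup|].
      intros [x y] Hxy. apply in_prod; apply nodup_In; apply in_map_iff; [exists (x,y)|exists (x,y)]; auto. }
    rewrite rs_list_prod.
    apply Rle_trans with (rs (fun m => rs (fun j => 4 * Mc * cn (a m) * cn (b j)) L2) L1).
    { apply rs_le; intros m _; apply rs_le; intros j _. unfold F2; simpl.
      eapply Rle_trans; [apply cn_mul3|].
      pose proof (cn_tm b c (Z4sub n m) j). pose proof (cn_phase m (Z4sub n m)).
      pose proof (bnd_pt c Mc (Z4sub (Z4sub n m) j) Hc).
      pose proof (cn_ge0 (a m)); pose proof (cn_ge0 (b j)); pose proof (cn_ge0 (tm b c (Z4sub n m) j)).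
      pose proof (cn_ge0 (c (Z4sub (Z4sub n m) j))).
      apply Rle_trans with (cn (a m) * (2 * (cn (b j) * Mc)) * 2).
      { assert (cn (tm b c (Z4sub n m) j) <= 2 * (cn (b j) * Mc)).
        { eapply Rle_trans; [apply H|]. apply Rmult_le_compat_l; [lra|]. apply Rmult_le_compat_l; auto. }
        apply Rmult_le_compat; [apply Rmult_le_pos; auto|apply cn_ge0|apply Rmult_le_compat_l; auto|auto]. }
      lra. }
    rewrite (rs_ext _ (fun m => (4 * Mc * cn (a m)) * rs (fun j => cn (b j)) L2)).
    2: { intros; rewrite <- rs_scal; apply rs_ext; intros; ring. }
    pose proof (Hb L2 (NoDup_nodup _ _)). pose proof (bnd_ge0 c Mc Hc).
    apply Rle_trans with (rs (fun m => 4 * Mc * Mb * cn (a m)) L1).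
    { apply rs_le; intros m _. pose proof (cn_ge0 (a m)).
      replace (4 * Mc * Mb * cn (a m)) with ((4 * Mc * cn (a m)) * Mb) by ring.
      apply Rmult_le_compat_l; auto. nra. }
    rewrite rs_scal. pose proof (Ha L1 (NoDup_nodup _ _)). pose proof (bnd_ge0 b Mb Hb).
    replace (4 * Mc * (Ma * Mb)) with (4 * Mc * Mb * Ma) by ring. apply Rmult_le_compat_l; nra. }
  destruct (hasS_ex _ _ HF2) as [sg Hsg].
  assert (HR : mul theta a (mul theta b c) n = sg).
  { eapply mul_eq; [apply Ha|apply (mul_bnd b c Mb Mc Hb Hc)|].
    apply (hasS_fubini F2); auto. intros m.
    eapply hasS_ext; [|apply hasS_cmul, hasS_mulc, (mul_hasS b c Mb Mc (Z4sub n m) Hb Hc)].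
    intros; reflexivity. }
  rewrite HR. eapply mul_eq; [apply (mul_bnd a b Ma Mb Ha Hb)|apply Hc|].
  set (F1 := fun p : Z4 * Z4 => F2 (snd p, Z4sub (fst p) (snd p))).
  assert (HF1 : hasS F1 sg).
  { apply (hasS_reindex (fun p : Z4 * Z4 => (snd p, Z4sub (fst p) (snd p)))
      (fun p : Z4 * Z4 => (Z4add (fst p) (snd p), fst p))); auto.
    intros [x y]; simpl; f_equal; apply Z4_ext; simpl; lia.
    intros [x y]; simpl; f_equal; apply Z4_ext; simpl; lia. }
  apply (hasS_fubini F1); auto. intros k.
  eapply hasS_ext; [|apply hasS_cmul, hasS_cmul, (mul_hasS a b Ma Mb k Ha Hb)].
  intros m. unfold F1, F2, tm; simpl.
  replace (Z4sub (Z4sub n m) (Z4sub k m)) with (Z4sub n k) by (apply Z4_ext; simpl; lia).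
  pose proof (phase_assoc n k m) as E.
  transitivity (Cmul (Cmul (Cmul (a m) (b (Z4sub k m))) (c (Z4sub n k))) (Cmul (ph m (Z4sub k m)) (ph k (Z4sub n k)))).
  Cring. rewrite E. Cring. Qed.
End Alg.

Section Alg2.
Variable theta : nat -> nat -> R.
Notation mul := (mul theta).

Lemma L1_add a b : L1 a -> L1 b -> L1 (add a b).
Proof. intros [Ma Ha] [Mb Hb]; eexists; apply bnd_add; eauto. Qed.
Lemma L1_opp a : L1 a -> L1 (opp a).
Proof. intros [Ma Ha]; eexists; apply bnd_opp; eauto. Qed.
Lemma L1_sub a b : L1 a -> L1 b -> L1 (sub a b).
Proof. intros [Ma Ha] [Mb Hb]; eexists; apply bnd_sub; eauto. Qed.
Lemma L1_scal r a : L1 a -> L1 (scal r a).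
Proof. intros [Ma Ha]; eexists; apply bnd_scal; eauto. Qed.
Lemma L1_mul a b : L1 a -> L1 b -> L1 (mul a b).
Proof. intros [Ma Ha] [Mb Hb]; eexists; apply mul_bnd; eauto. Qed.
Lemma L1_one : L1 one.
Proof. eexists; apply bnd_one. Qed.
Lemma L1_zero : L1 (fun _ => C0).
Proof. eexists; apply bnd_zero. Qed.

Lemma mulA a b c : L1 a -> L1 b -> L1 c -> mul (mul a b) c = mul a (mul b c).
Proof. intros [Ma Ha] [Mb Hb] [Mc Hc]; eapply mul_assoc; eauto. Qed.
Lemma mul_subR a b c : L1 a -> L1 b -> L1 c -> mul a (sub b c) = sub (mul a b) (mul a c).
Proof. intros [Ma Ha] [Mb Hb] [Mc Hc]; eapply mul_sub_r; eauto. Qed.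
Lemma mul_subL a b c : L1 a -> L1 b -> L1 c -> mul (sub a b) c = sub (mul a c) (mul b c).
Proof. intros [Ma Ha] [Mb Hb] [Mc Hc]; eapply mul_sub_l; eauto. Qed.
Lemma mul_addR a b c : L1 a -> L1 b -> L1 c -> mul a (add b c) = add (mul a b) (mul a c).
Proof. intros [Ma Ha] [Mb Hb] [Mc Hc]; eapply mul_add_r; eauto. Qed.
Lemma mul_addL a b c : L1 a -> L1 b -> L1 c -> mul (add a b) c = add (mul a c) (mul b c).
Proof. intros [Ma Ha] [Mb Hb] [Mc Hc]; eapply mul_add_l; eauto. Qed.
Lemma mul_scalR r a b : L1 a -> L1 b -> mul a (scal r b) = scal r (mul a b).
Proof. intros [Ma Ha] [Mb Hb]; eapply mul_scal_r; eauto. Qed.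
Lemma mul_scalL r a b : L1 a -> L1 b -> mul (scal r a) b = scal r (mul a b).
Proof. intros [Ma Ha] [Mb Hb]; eapply mul_scal_l; eauto. Qed.
Lemma mul_0L b : L1 b -> mul (fun _ => C0) b = (fun _ => C0).
Proof. intros [Mb Hb]; eapply mul_zero_l; eauto. Qed.
Lemma mul_0R a : L1 a -> mul a (fun _ => C0) = (fun _ => C0).
Proof. intros [Ma Ha]; eapply mul_zero_r; eauto. Qed.
Lemma phi0_mulC a b : L1 a -> L1 b -> phi0 (mul a b) = phi0 (mul b a).
Proof. intros [Ma Ha] [Mb Hb]; eapply phi0_comm; eauto. Qed.

Lemma L1_nabla h a : L1 h -> L1 a -> L1 (nabla theta h a).
Proof. intros; unfold nabla; apply L1_sub; apply L1_mul; auto. Qed.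
Lemma L1_iter h a j : L1 h -> L1 a -> L1 (Nat.iter j (nabla theta h) a).
Proof. intros Hh Ha; induction j; simpl; auto. apply L1_nabla; auto. Qed.

Lemma bnd_nabla h a Mh Ma : bnd h Mh -> bnd a Ma -> bnd (nabla theta h a) (4 * Mh * Ma).
Proof. intros Hh Ha. unfold nabla. eapply bnd_mono; [apply bnd_sub; apply mul_bnd; eauto|]. lra. Qed.
Lemma bnd_iter h a Mh Ma j : bnd h Mh -> bnd a Ma -> bnd (Nat.iter j (nabla theta h) a) ((4 * Mh) ^ j * Ma).
Proof. intros Hh Ha; induction j; simpl. eapply bnd_mono; eauto; lra.
  eapply bnd_mono; [apply bnd_nabla; eauto|]. lra. Qed.

Lemma phi0_sub f g : phi0 (sub f g) = Csub (phi0 f) (phi0 g).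
Proof. reflexivity. Qed.

Lemma phi0_nabla h y z : L1 h -> L1 y -> L1 z ->
  phi0 (mul y (nabla theta h z)) = Copp (phi0 (mul (nabla theta h y) z)).
Proof. intros Hh Hy Hz. unfold nabla.
  rewrite mul_subR, mul_subL by (auto; apply L1_mul; auto).
  rewrite !phi0_sub.
  rewrite <- (mulA y z h), <- (mulA y h z) by auto.
  rewrite (phi0_mulC (mul y z) h) by (auto; apply L1_mul; auto).
  rewrite <- (mulA h y z) by auto.
  unfold Csub; Cring. Qed.

Lemma phi0_iter h y z k : L1 h -> L1 y -> L1 z ->
  phi0 (mul y (Nat.iter k (nabla theta h) z)) = Cscal ((-1) ^ k) (phi0 (mul (Nat.iter k (nabla theta h) y) z)).
Proof. intros Hh Hy Hz. revert y Hy; induction k; intros y Hy.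
  - simpl. unfold Cscal; apply C_ext; simpl; ring.
  - simpl Nat.iter at 1. rewrite phi0_nabla by (auto; apply L1_iter; auto).
    rewrite IHk by (apply L1_nabla; auto). rewrite <- Nat.iter_succ_r.
    apply C_ext; unfold Copp, Cscal; simpl; ring. Qed.

Lemma nabla_comm h e w : L1 h -> L1 e -> L1 w -> mul e h = mul h e ->
  nabla theta h (mul e w) = mul e (nabla theta h w).
Proof. intros Hh He Hw Hc. unfold nabla.
  rewrite mul_subR by (auto; apply L1_mul; auto). rewrite (mulA e w h) by auto.
  rewrite <- (mulA h e w) by auto. rewrite <- Hc. rewrite (mulA e h w) by auto. reflexivity. Qed.

Lemma iter_comm h e w j : L1 h -> L1 e -> L1 w -> mul e h = mul h e ->
  Nat.iter j (nabla theta h) (mul e w) = mul e (Nat.iter j (nabla theta h) w).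
Proof. intros Hh He Hw Hc; induction j; simpl; auto.
  rewrite IHj. apply nabla_comm; auto. apply L1_iter; auto. Qed.

Lemma nabla_self h e : mul e h = mul h e -> nabla theta h e = (fun _ => C0).
Proof. intros Hc. unfold nabla. rewrite Hc. apply functional_extensionality; intros; unfold sub, add, opp; Cring. Qed.

Lemma phi0_comm_iter h e X j : L1 h -> L1 e -> L1 X -> mul e h = mul h e ->
  phi0 (mul e (Nat.iter (S j) (nabla theta h) X)) = C0.
Proof. intros Hh He HX Hc. simpl Nat.iter.
  rewrite phi0_nabla by (auto; apply L1_iter; auto). rewrite nabla_self by auto.
  rewrite mul_0L by (apply L1_iter; auto). unfold phi0, Copp, C0; apply C_ext; simpl; ring. Qed.

End Alg2.

Definition conv1 (u : nat -> NCT) (a : NCT) :=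
  forall eps, 0 < eps -> exists N0, forall N, (N0 <= N)%nat -> bnd (sub (u N) a) eps.

Lemma cn_sub_sym x y : cn (Csub x y) = cn (Csub y x).
Proof. replace (Csub y x) with (Copp (Csub x y)) by (unfold Csub; Cring). rewrite cn_opp; auto. Qed.

Lemma bnd_sub_sym (a b : NCT) M : bnd (sub a b) M -> bnd (sub b a) M.
Proof. intros H l Hl. rewrite (rs_ext _ (fun n => cn (sub a b n))). apply H; auto.
  intros; unfold sub, add, opp. apply (cn_sub_sym (b x) (a x)). Qed.

Lemma cn_fst_sub x y : Rabs (fst x - fst y) <= cn (Csub x y).
Proof. unfold cn, Csub, Cadd, Copp; simpl. pose proof (Rabs_pos (snd x + - snd y)). unfold Rminus; lra. Qed.
Lemma cn_snd_sub x y : Rabs (snd x - snd y) <= cn (Csub x y).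
Proof. unfold cn, Csub, Cadd, Copp; simpl. pose proof (Rabs_pos (fst x + - fst y)). unfold Rminus; lra. Qed.

Lemma Ccv_cn (u : nat -> C) l : (forall eps, 0 < eps -> exists N0, forall N, (N0 <= N)%nat -> cn (Csub (u N) l) <= eps) ->
  Ccv u l.
Proof. intros H; split; intros eps He; destruct (H (eps/2)) as [N0 HN]; try lra; exists N0; intros N HN';
  unfold R_dist; specialize (HN N HN'). pose proof (cn_fst_sub (u N) l); lra. pose proof (cn_snd_sub (u N) l); lra. Qed.

Lemma Ccv_cn_inv (u : nat -> C) l : Ccv u l ->
  forall eps, 0 < eps -> exists N0, forall N, (N0 <= N)%nat -> cn (Csub (u N) l) <= eps.
Proof. intros [A B] eps He. destruct (A (eps/2)) as [N1 H1]; [lra|]. destruct (B (eps/2)) as [N2 H2]; [lra|].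
  exists (max N1 N2). intros N HN. specialize (H1 N ltac:(lia)); specialize (H2 N ltac:(lia)).
  unfold R_dist in *. unfold cn, Csub, Cadd, Copp; simpl. unfold Rminus in *; lra. Qed.

Lemma complete (P : nat -> NCT) : (forall N, L1 (P N)) ->
  (forall eps, 0 < eps -> exists N0, forall N M, (N0 <= N)%nat -> (N0 <= M)%nat -> bnd (sub (P N) (P M)) eps) ->
  L1 (fun n => Clim (fun N => P N n)) /\ conv1 P (fun n => Clim (fun N => P N n)) /\
  (forall n, Ccv (fun N => P N n) (Clim (fun N => P N n))).
Proof. intros HL HC.
  assert (Hpt : forall n, Ccv (fun N => P N n) (Clim (fun N => P N n))).
  { intros n. assert (Hc1 : Cauchy_crit (fun N => fst (P N n))).
    { intros eps He. destruct (HC (eps/2)) as [N0 H0]; [lra|]. exists N0; intros N M HN HM.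
      pose proof (bnd_pt _ _ n (H0 N M HN HM)). pose proof (cn_fst_sub (P N n) (P M n)).
      unfold R_dist. unfold sub, add, opp in H. fold (Csub (P N n) (P M n)) in H. lra. }
    assert (Hc2 : Cauchy_crit (fun N => snd (P N n))).
    { intros eps He. destruct (HC (eps/2)) as [N0 H0]; [lra|]. exists N0; intros N M HN HM.
      pose proof (bnd_pt _ _ n (H0 N M HN HM)). pose proof (cn_snd_sub (P N n) (P M n)).
      unfold R_dist. unfold sub, add, opp in H. fold (Csub (P N n) (P M n)) in H. lra. }
    destruct (R_complete _ Hc1) as [l1 Hl1]; destruct (R_complete _ Hc2) as [l2 Hl2].
    assert (Hcv : Ccv (fun N => P N n) (l1, l2)) by (split; auto).
    rewrite (Clim_eq _ _ Hcv); auto. }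
  set (a := fun n => Clim (fun N => P N n)).
  assert (Hconv : conv1 P a).
  { intros eps He. destruct (HC (eps/2)) as [N0 H0]; [lra|]. exists N0. intros N HN l Hl.
    set (d := eps / (2 * (INR (length l) + 1))).
    assert (Hd : 0 < d) by (unfold d; apply Rdiv_lt_0_compat; [lra|]; pose proof (pos_INR (length l)); lra).
    assert (Hbd : INR (length l) * d <= eps / 2).
    { unfold d. pose proof (pos_INR (length l)).
      apply (Rmult_le_reg_r (2 * (INR (length l) + 1))); [lra|]. field_simplify; lra. }
    clearbody d.
    assert (HK : exists K, forall M, (K <= M)%nat -> forall n, In n l -> cn (Csub (P M n) (a n)) <= d).
    { clear Hl Hbd. induction l as [|x l IH]. exists O; intros M _ n []. 
      destruct IH as [K1 HK1]. destruct (Ccv_cn_inv _ _ (Hpt x) d Hd) as [K2 HK2].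
      exists (max K1 K2). intros M HM n [<-|Hn]. apply HK2; lia. apply HK1; auto; lia. }
    destruct HK as [K HK]. set (M := max K N0).
    apply Rle_trans with (rs (fun n => cn (sub (P N) (P M) n) + cn (Csub (P M n) (a n))) l).
    { apply rs_le; intros n _. unfold sub, add, opp.
      replace (Cadd (P N n) (Copp (a n))) with (Cadd (Csub (P N n) (P M n)) (Csub (P M n) (a n))) by (unfold Csub; Cring).
      apply cn_add. }
    rewrite rs_plus. pose proof (H0 N M HN ltac:(lia) l Hl).
    pose proof (rs_le_len (fun n => cn (Csub (P M n) (a n))) l d (fun n Hn => HK M ltac:(lia) n Hn)).
    lra. }
  split; [|split; auto].
  destruct (Hconv 1 ltac:(lra)) as [N1 HN1]. destruct (HL N1) as [M1 HM1].
  exists (M1 + 1). intros l Hl. specialize (HN1 N1 (le_n _) l Hl). specialize (HM1 l Hl).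
  apply Rle_trans with (rs (fun n => cn (P N1 n) + cn (sub (P N1) a n)) l).
  { apply rs_le; intros n _. unfold sub, add, opp.
    replace (a n) with (Cadd (P N1 n) (Copp (Cadd (P N1 n) (Copp (a n))))) at 1 by Cring.
    eapply Rle_trans; [apply cn_add|]. rewrite cn_opp; lra. }
  rewrite rs_plus; lra. Qed.

Lemma rs_seq (g : nat -> R) N : rs g (seq 0 (N + 1)) = sum_f_R0 g N.
Proof. induction N. simpl. rewrite rs_cons, rs_nil; ring.
  replace (S N + 1)%nat with (S (N + 1)) by lia. rewrite seq_S, rs_app, IHN, rs_cons, rs_nil, tech5.
  replace (0 + (N + 1))%nat with (S N) by lia. ring. Qed.

Lemma Csum_app (l1 l2 : list C) : Csum (l1 ++ l2) = Cadd (Csum l1) (Csum l2).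
Proof. induction l1; simpl. unfold C0; Cring. rewrite IHl1; Cring. Qed.

Lemma bnd_Csum {I} (w : I -> NCT) (b : I -> R) (L : list I) : (forall k, In k L -> bnd (w k) (b k)) ->
  bnd (fun n => Csum (map (fun k => w k n) L)) (rs b L).
Proof. intros H l Hl.
  apply Rle_trans with (rs (fun n => rs (fun k => cn (w k n)) L) l).
  { apply rs_le; intros; apply cn_Csum. }
  rewrite rs_swap. apply rs_le. intros k Hk. apply H; auto. Qed.

Definition psum (c : nat -> R) (v : nat -> NCT) (N : nat) : NCT :=
  fun n => Csum (map (fun k => Cscal (c k) (v k n)) (seq 0 (N + 1))).

Lemma psum_diff c v N M : (N <= M)%nat ->
  sub (psum c v M) (psum c v N) = (fun n => Csum (map (fun k => Cscal (c k) (v k n)) (seq (N + 1) (M - N)))).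
Proof. intros H. apply functional_extensionality; intros n. unfold psum, sub, add, opp.
  replace (M + 1)%nat with ((N + 1) + (M - N))%nat by lia. rewrite seq_app, map_app, Csum_app.
  simpl (0 + _)%nat. Cring. Qed.

Lemma series_complete (c : nat -> R) (v : nat -> NCT) (B : nat -> R) :
  (forall k, bnd (v k) (B k)) -> Cauchy_crit (sum_f_R0 (fun k => Rabs (c k) * B k)) ->
  L1 (fun n => Clim (fun N => psum c v N n)) /\ conv1 (psum c v) (fun n => Clim (fun N => psum c v N n)) /\
  (forall n, Ccv (fun N => psum c v N n) (Clim (fun N => psum c v N n))).
Proof. intros Hv HC.
  assert (Hd : forall N M, (N <= M)%nat -> bnd (sub (psum c v M) (psum c v N))
     (sum_f_R0 (fun k => Rabs (c k) * B k) M - sum_f_R0 (fun k => Rabs (c k) * B k) N)).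
  { intros N M H. rewrite psum_diff by auto.
    replace (sum_f_R0 (fun k => Rabs (c k) * B k) M - sum_f_R0 (fun k => Rabs (c k) * B k) N)
      with (rs (fun k => Rabs (c k) * B k) (seq (N + 1) (M - N))).
    apply (bnd_Csum (fun k => scal (c k) (v k))). intros; apply bnd_scal; auto.
    rewrite <- !rs_seq. replace (M + 1)%nat with ((N + 1) + (M - N))%nat by lia.
    rewrite seq_app, rs_app. simpl (0 + _)%nat. ring. }
  apply complete.
  - intros N. exists (rs (fun k => Rabs (c k) * B k) (seq 0 (N + 1))).
    apply (bnd_Csum (fun k => scal (c k) (v k))). intros; apply bnd_scal; auto.
  - intros eps He. destruct (HC eps He) as [N0 H0]. exists N0. intros N M HN HM.
    destruct (le_dec N M) as [Hle|Hle].
    + apply bnd_sub_sym. eapply bnd_mono; [apply Hd; auto|].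
      specialize (H0 M N ltac:(lia) ltac:(lia)). unfold R_dist in H0. pose proof (Rle_abs (sum_f_R0 (fun k => Rabs (c k) * B k) M - sum_f_R0 (fun k => Rabs (c k) * B k) N)). lra.
    + eapply bnd_mono; [apply Hd; lia|].
      specialize (H0 N M ltac:(lia) ltac:(lia)). unfold R_dist in H0. pose proof (Rle_abs (sum_f_R0 (fun k => Rabs (c k) * B k) N - sum_f_R0 (fun k => Rabs (c k) * B k) M)). lra. Qed.

Section Cont.
Variable theta : nat -> nat -> R.
Notation mul := (mul theta).

Lemma conv1_mul_l c u a : L1 c -> conv1 u a -> (forall N, L1 (u N)) -> L1 a ->
  forall n, Ccv (fun N => mul c (u N) n) (mul c a n).
Proof. intros [Mc Hc] Hconv Hu Ha n. apply Ccv_cn. intros eps He.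
  pose proof (bnd_ge0 _ _ Hc).
  destruct (Hconv (eps / (2 * Mc + 1))) as [N0 H0]. apply Rdiv_lt_0_compat; lra.
  exists N0. intros N HN.
  replace (Csub (mul c (u N) n) (mul c a n)) with (mul c (sub (u N) a) n).
  2: { rewrite mul_subR; auto. eexists; eauto. }
  eapply Rle_trans; [apply (bnd_pt _ _ n (mul_bnd theta c _ _ _ Hc (H0 N HN)))|].
  apply (Rmult_le_reg_r (2 * Mc + 1)); [lra|]. field_simplify; [|lra]. nra. Qed.

Lemma conv1_mul_r c u a : L1 c -> conv1 u a -> (forall N, L1 (u N)) -> L1 a ->
  forall n, Ccv (fun N => mul (u N) c n) (mul a c n).
Proof. intros [Mc Hc] Hconv Hu Ha n. apply Ccv_cn. intros eps He.
  pose proof (bnd_ge0 _ _ Hc).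
  destruct (Hconv (eps / (2 * Mc + 1))) as [N0 H0]. apply Rdiv_lt_0_compat; lra.
  exists N0. intros N HN.
  replace (Csub (mul (u N) c n) (mul a c n)) with (mul (sub (u N) a) c n).
  2: { rewrite mul_subL; auto. eexists; eauto. }
  eapply Rle_trans; [apply (bnd_pt _ _ n (mul_bnd theta _ c _ _ (H0 N HN) Hc))|].
  apply (Rmult_le_reg_r (2 * Mc + 1)); [lra|]. field_simplify; [|lra]. nra. Qed.

Lemma L1_Csum (c : nat -> R) (v : nat -> NCT) L : (forall k, L1 (v k)) ->
  L1 (fun n => Csum (map (fun k => Cscal (c k) (v k n)) L)).
Proof. intros Hv. induction L; simpl. apply L1_zero.
  apply (L1_add (scal (c a) (v a))); auto. apply L1_scal; auto. Qed.

Lemma mul_Csum_l e (c : nat -> R) (v : nat -> NCT) L : L1 e -> (forall k, L1 (v k)) ->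
  mul e (fun n => Csum (map (fun k => Cscal (c k) (v k n)) L)) =
  (fun n => Csum (map (fun k => Cscal (c k) (mul e (v k) n)) L)).
Proof. intros He Hv. induction L; simpl. apply mul_0R; auto.
  change (fun n => Cadd (Cscal (c a) (v a n)) (Csum (map (fun k => Cscal (c k) (v k n)) L)))
    with (add (scal (c a) (v a)) (fun n => Csum (map (fun k => Cscal (c k) (v k n)) L))).
  rewrite mul_addR, mul_scalR, IHL; auto. apply L1_scal; auto. apply L1_Csum; auto. Qed.

Lemma mul_Csum_r e (c : nat -> R) (v : nat -> NCT) L : L1 e -> (forall k, L1 (v k)) ->
  mul (fun n => Csum (map (fun k => Cscal (c k) (v k n)) L)) e =
  (fun n => Csum (map (fun k => Cscal (c k) (mul (v k) e n)) L)).
Proof. intros He Hv. induction L; simpl. apply mul_0L; auto.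
  change (fun n => Cadd (Cscal (c a) (v a n)) (Csum (map (fun k => Cscal (c k) (v k n)) L)))
    with (add (scal (c a) (v a)) (fun n => Csum (map (fun k => Cscal (c k) (v k n)) L))).
  rewrite mul_addL, mul_scalL, IHL; auto. apply L1_scal; auto. apply L1_Csum; auto. Qed.

End Cont.

Lemma cn_Cabs x : cn x <= 2 * Cabs x.
Proof. unfold cn, Cabs. 
  assert (Rabs (fst x) <= sqrt (fst x ^ 2 + snd x ^ 2)).
  { rewrite <- sqrt_Rsqr_abs. apply sqrt_le_1_alt. unfold Rsqr; simpl. nra. }
  assert (Rabs (snd x) <= sqrt (fst x ^ 2 + snd x ^ 2)).
  { rewrite <- sqrt_Rsqr_abs. apply sqrt_le_1_alt. unfold Rsqr; simpl. nra. }
  lra. Qed.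

Lemma sum_inv_sq N : sum_f_R0 (fun k => / (1 + INR k) ^ 2) N <= 2 - / (INR N + 1).
Proof. induction N.
  simpl sum_f_R0. simpl INR. replace ((1 + 0) ^ 2) with 1 by ring. replace (0 + 1) with 1 by ring.
  rewrite Rinv_1; lra.
  rewrite tech5. rewrite S_INR.
  pose proof (pos_INR N).
  assert (/ (1 + (INR N + 1)) ^ 2 + / (INR N + 1 + 1) <= / (INR N + 1)).
  { replace (1 + (INR N + 1)) with (INR N + 2) by ring. replace (INR N + 1 + 1) with (INR N + 2) by ring.
    apply (Rmult_le_reg_r ((INR N + 2)^2 * (INR N + 1))). apply Rmult_lt_0_compat; [apply pow_lt|]; lra.
    field_simplify; try lra; try nra. }
  lra. Qed.

Lemma rs_scal_r {T} (g : T -> R) c l : rs (fun x => g x * c) l = rs g l * c.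
Proof. rewrite (rs_ext _ (fun x => c * g x)) by (intros; ring). rewrite rs_scal; ring. Qed.

Lemma rs_prod4 f1 f2 f3 f4 L1 L2 L3 L4 :
  rs (fun n => f1 (z1 n) * f2 (z2 n) * f3 (z3 n) * f4 (z4 n)) (prod4 L1 L2 L3 L4) =
  rs f1 L1 * rs f2 L2 * rs f3 L3 * rs f4 L4.
Proof. unfold prod4. rewrite rs_flat_map.
  rewrite (rs_ext _ (fun a => f1 a * (rs f2 L2 * rs f3 L3 * rs f4 L4))).
  rewrite rs_scal_r; ring.
  intros a _. rewrite rs_flat_map.
  rewrite (rs_ext _ (fun b => f2 b * (f1 a * rs f3 L3 * rs f4 L4))).
  rewrite rs_scal_r; ring.
  intros b _. rewrite rs_flat_map.
  rewrite (rs_ext _ (fun c => f3 c * (f1 a * f2 b * rs f4 L4))).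
  rewrite rs_scal_r; ring.
  intros c _. rewrite rs_map. simpl. rewrite <- !rs_scal. apply rs_ext; intros; ring. Qed.

Definition wz (z : Z) : R := / (1 + Rabs (IZR z)) ^ 2.

Lemma wz_pos z : 0 < wz z.
Proof. unfold wz. apply Rinv_0_lt_compat, pow_lt. pose proof (Rabs_pos (IZR z)); lra. Qed.

Lemma rs_wz L : NoDup L -> rs wz L <= 4.
Proof. intros HL.
  set (N := fold_right Nat.max O (map (fun z => Z.to_nat (Z.abs z)) L)).
  assert (HN : forall z, In z L -> (Z.abs z <= Z.of_nat N)%Z).
  { intros z Hz. unfold N. clear HL. induction L; [destruct Hz|]. simpl. destruct Hz as [<-|Hz]. lia.
    specialize (IHL Hz). lia. }
  set (ZL := map Z.of_nat (seq 0 (N + 1)) ++ map (fun k => (- Z.of_nat (S k))%Z) (seq 0 (N + 1))).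
  apply Rle_trans with (rs wz ZL).
  { apply rs_incl_le. intros; left; apply wz_pos. auto.
    - unfold ZL. apply NoDup_app. apply NoDup_map_inj'. intros; lia. apply seq_NoDup.
      apply NoDup_map_inj'. intros; lia. apply seq_NoDup.
      intros z H1 H2. apply in_map_iff in H1 as [k [<- _]]. apply in_map_iff in H2 as [k' [E _]]. lia.
    - intros z Hz. specialize (HN z Hz). unfold ZL. apply in_or_app. destruct (Z_le_dec 0 z).
      left. apply in_map_iff. exists (Z.to_nat z). split. lia. apply in_seq. lia.
      right. apply in_map_iff. exists (Z.to_nat (- z - 1)). split. lia. apply in_seq. lia. }
  unfold ZL. rewrite rs_app, !rs_map, !rs_seq.
  assert (A : sum_f_R0 (fun x => wz (Z.of_nat x)) N <= 2).
  { eapply Rle_trans; [|pose proof (sum_inv_sq N); pose proof (pos_INR N);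
      assert (0 < / (INR N + 1)) by (apply Rinv_0_lt_compat; lra); apply Rle_trans with (2 - / (INR N + 1)); [exact H|lra]].
    apply sum_Rle. intros k _. unfold wz. rewrite <- INR_IZR_INZ, Rabs_right. lra. apply Rle_ge, pos_INR. }
  assert (B : sum_f_R0 (fun x => wz (- Z.of_nat (S x))) N <= 2).
  { eapply Rle_trans; [|apply A]. apply sum_Rle. intros k _. unfold wz.
    rewrite opp_IZR, Rabs_Ropp, <- !INR_IZR_INZ, !Rabs_right by (apply Rle_ge, pos_INR).
    rewrite S_INR. pose proof (pos_INR k).
    apply Rinv_le_contravar. apply pow_lt; lra. apply pow_incr; lra. }
  lra. Qed.

#[export] Instance EqDec_Z : EqDec Z := Z.eq_dec.

Definition w4 (n : Z4) : R := wz (z1 n) * wz (z2 n) * wz (z3 n) * wz (z4 n).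

Lemma rs_w4 l : NoDup l -> rs w4 l <= 256.
Proof. intros Hl.
  set (L1 := nodup eqd (map z1 l)). set (L2 := nodup eqd (map z2 l)).
  set (L3 := nodup eqd (map z3 l)). set (L4 := nodup eqd (map z4 l)).
  apply Rle_trans with (rs w4 (prod4 L1 L2 L3 L4)).
  { apply rs_incl_le; auto. intros; unfold w4; pose proof (wz_pos (z1 x)); pose proof (wz_pos (z2 x));
      pose proof (wz_pos (z3 x)); pose proof (wz_pos (z4 x)).
      apply Rmult_le_pos; [apply Rmult_le_pos; [apply Rmult_le_pos|]|]; lra.
    apply NoDup_prod4; apply NoDup_nodup.
    intros n Hn. apply in_prod4. unfold L1, L2, L3, L4; rewrite !nodup_In; repeat split; apply in_map; auto. }
  unfold w4. rewrite rs_prod4.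
  pose proof (rs_wz L1 (NoDup_nodup _ _)); pose proof (rs_wz L2 (NoDup_nodup _ _));
  pose proof (rs_wz L3 (NoDup_nodup _ _)); pose proof (rs_wz L4 (NoDup_nodup _ _)).
  assert (forall L, 0 <= rs wz L) by (intros; apply rs_ge0; intros; left; apply wz_pos).
  pose proof (H3 L1); pose proof (H3 L2); pose proof (H3 L3); pose proof (H3 L4).
  replace 256 with (4 * 4 * 4 * 4) by ring.
  assert (rs wz L1 * rs wz L2 <= 4 * 4) by (apply Rmult_le_compat; auto).
  assert (rs wz L1 * rs wz L2 * rs wz L3 <= 4 * 4 * 4) by (apply Rmult_le_compat; auto; apply Rmult_le_pos; auto).
  apply Rmult_le_compat; auto. apply Rmult_le_pos; [apply Rmult_le_pos|]; auto. Qed.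

Lemma zc_le n i : 1 + Rabs (IZR (zc n i)) <=
  1 + Rabs (IZR (z1 n)) + Rabs (IZR (z2 n)) + Rabs (IZR (z3 n)) + Rabs (IZR (z4 n)).
Proof. pose proof (Rabs_pos (IZR (z1 n))); pose proof (Rabs_pos (IZR (z2 n)));
  pose proof (Rabs_pos (IZR (z3 n))); pose proof (Rabs_pos (IZR (z4 n))).
  destruct i as [|[|[|[|[|i]]]]]; simpl; try (rewrite Rabs_R0); lra. Qed.

Lemma rapid_weight h : rapid h -> exists K, 0 <= K /\ forall i n, cn (h n) * (1 + Rabs (IZR (zc n i))) ^ 2 <= K * w4 n.
Proof. intros Hr. destruct (Hr 10%nat) as [M HM]. exists (2 * M).
  assert (HM0 : 0 <= M).
  { specialize (HM Z4zero). eapply Rle_trans; [|apply HM]. apply Rmult_le_pos.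
    unfold Cabs; apply sqrt_pos. apply pow_le. simpl. rewrite Rabs_R0; lra. }
  split; [lra|]. intros i n.
  set (S := 1 + Rabs (IZR (z1 n)) + Rabs (IZR (z2 n)) + Rabs (IZR (z3 n)) + Rabs (IZR (z4 n))).
  specialize (HM n). fold S in HM.
  set (a := 1 + Rabs (IZR (zc n i))).
  set (b1 := 1 + Rabs (IZR (z1 n))). set (b2 := 1 + Rabs (IZR (z2 n))).
  set (b3 := 1 + Rabs (IZR (z3 n))). set (b4 := 1 + Rabs (IZR (z4 n))).
  assert (Ha : 1 <= a <= S) by (split; [unfold a; pose proof (Rabs_pos (IZR (zc n i))); lra|apply zc_le]).
  assert (H1 : 1 <= b1 <= S) by (split; [unfold b1; pose proof (Rabs_pos (IZR (z1 n))); lra|apply (zc_le n 1)]).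
  assert (H2 : 1 <= b2 <= S) by (split; [unfold b2; pose proof (Rabs_pos (IZR (z2 n))); lra|apply (zc_le n 2)]).
  assert (H3 : 1 <= b3 <= S) by (split; [unfold b3; pose proof (Rabs_pos (IZR (z3 n))); lra|apply (zc_le n 3)]).
  assert (H4 : 1 <= b4 <= S) by (split; [unfold b4; pose proof (Rabs_pos (IZR (z4 n))); lra|apply (zc_le n 4)]).
  assert (Hw : w4 n = / (b1 ^ 2 * b2 ^ 2 * b3 ^ 2 * b4 ^ 2)).
  { unfold w4, wz. fold b1 b2 b3 b4. rewrite !Rinv_mult. reflexivity. }
  assert (Hprod : a ^ 2 * (b1 ^ 2 * b2 ^ 2 * b3 ^ 2 * b4 ^ 2) <= S ^ 10).
  { replace (S ^ 10) with (S ^ 2 * (S ^ 2 * S ^ 2 * S ^ 2 * S ^ 2)) by ring.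
    assert (forall x, 1 <= x <= S -> 1 <= x ^ 2 <= S ^ 2).
    { intros x Hx. split. nra. apply pow_incr; lra. }
    pose proof (H _ Ha); pose proof (H _ H1); pose proof (H _ H2); pose proof (H _ H3); pose proof (H _ H4).
    repeat (apply Rmult_le_compat; try nra). }
  pose proof (cn_Cabs (h n)). assert (0 <= Cabs (h n)) by (unfold Cabs; apply sqrt_pos).
  assert (Hb : 0 < b1 ^ 2 * b2 ^ 2 * b3 ^ 2 * b4 ^ 2) by (repeat apply Rmult_lt_0_compat; try apply pow_lt; lra).
  rewrite Hw. apply (Rmult_le_reg_r (b1 ^ 2 * b2 ^ 2 * b3 ^ 2 * b4 ^ 2)); auto.
  rewrite (Rmult_assoc (2 * M)), Rinv_l by lra. rewrite Rmult_1_r.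
  apply Rle_trans with (2 * Cabs (h n) * (a ^ 2 * (b1 ^ 2 * b2 ^ 2 * b3 ^ 2 * b4 ^ 2))).
  { assert (0 <= a ^ 2) by (apply pow_le; lra). 
    replace (cn (h n) * a ^ 2 * (b1 ^ 2 * b2 ^ 2 * b3 ^ 2 * b4 ^ 2)) with
      (cn (h n) * (a ^ 2 * (b1 ^ 2 * b2 ^ 2 * b3 ^ 2 * b4 ^ 2))) by ring.
    apply Rmult_le_compat_r; [|lra]. apply Rmult_le_pos; lra. }
  replace (2 * Cabs (h n) * (a ^ 2 * (b1 ^ 2 * b2 ^ 2 * b3 ^ 2 * b4 ^ 2))) with
    (2 * (Cabs (h n) * (a ^ 2 * (b1 ^ 2 * b2 ^ 2 * b3 ^ 2 * b4 ^ 2)))) by ring.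
  apply Rmult_le_compat_l; [lra|]. eapply Rle_trans; [|apply HM].
  apply Rmult_le_compat_l; auto. Qed.

Lemma bnd_rapid h : rapid h -> exists K, forall i,
  bnd h K /\ bnd (delta i h) K /\ bnd (delta i (delta i h)) K.
Proof. intros Hr. destruct (rapid_weight h Hr) as [K [HK0 HK]]. exists (K * 256). intros i.
  assert (G : forall (f : NCT), (forall n, cn (f n) <= cn (h n) * (1 + Rabs (IZR (zc n i))) ^ 2) -> bnd f (K * 256)).
  { intros f Hf l Hl. apply Rle_trans with (rs (fun n => K * w4 n) l).
    apply rs_le; intros n _; eapply Rle_trans; [apply Hf|apply HK].
    rewrite rs_scal. apply Rmult_le_compat_l; auto. apply rs_w4; auto. }
  assert (Hz : forall n, 0 <= Rabs (IZR (zc n i))) by (intros; apply Rabs_pos).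
  split; [|split]; apply G; intros n; pose proof (cn_ge0 (h n)); pose proof (Hz n).
  - nra.
  - unfold delta; rewrite cn_scal. nra.
  - unfold delta; rewrite !cn_scal. nra. Qed.

#[export] Instance EqDec_nat : EqDec nat := Nat.eq_dec.

Lemma rs_perm {T} (g : T -> R) l l' : Permutation l l' -> rs g l = rs g l'.
Proof. induction 1; rewrite ?rs_cons; try lra. Qed.

Lemma rs_split {T} {ET : EqDec T} (g : T -> R) A B : NoDup A -> NoDup B -> incl A B ->
  rs g B = rs g A + rs g (filter (fun x => if in_dec eqd x A then false else true) B).
Proof. intros HA HB HI. rewrite <- rs_app. apply rs_perm. apply NoDup_Permutation; auto.
  - apply NoDup_app; auto. apply NoDup_filter; auto.
    intros x Hx Hx'. apply filter_In in Hx' as [_ H]. destruct (in_dec eqd x A); congruence.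
  - intros x; split; intros H.
    + destruct (in_dec eqd x A). apply in_or_app; auto. apply in_or_app; right. apply filter_In; split; auto.
      destruct (in_dec eqd x A); congruence.
    + apply in_app_or in H as [H|H]; auto. apply filter_In in H; tauto. Qed.

Lemma rs_diff_le {T} {ET : EqDec T} (g : T -> R) A B : NoDup A -> NoDup B -> incl A B ->
  Rabs (rs g B - rs g A) <= rs (fun x => Rabs (g x)) B - rs (fun x => Rabs (g x)) A.
Proof. intros HA HB HI. rewrite (rs_split g A B), (rs_split (fun x => Rabs (g x)) A B) by auto.
  replace (rs g A + rs g (filter (fun x => if in_dec eqd x A then false else true) B) - rs g A)
    with (rs g (filter (fun x => if in_dec eqd x A then false else true) B)) by ring.
  pose proof (rs_abs g (filter (fun x => if in_dec eqd x A then false else true) B)). lra. Qed.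

Definition SQ (N : nat) : list (nat * nat) := list_prod (seq 0 (N + 1)) (seq 0 (N + 1)).
Definition TL (N : nat) : list (nat * nat) :=
  flat_map (fun n => map (fun j => (j, (n - j)%nat)) (seq 0 (n + 1))) (seq 0 (N + 1)).

Lemma in_SQ N j k : In (j, k) (SQ N) <-> (j <= N /\ k <= N)%nat.
Proof. unfold SQ. rewrite in_prod_iff, !in_seq. lia. Qed.
Lemma in_TL N j k : In (j, k) (TL N) <-> (j + k <= N)%nat.
Proof. unfold TL. rewrite in_flat_map. split.
  - intros [n [Hn H]]. apply in_seq in Hn. apply in_map_iff in H as [j' [E Hj]]. apply in_seq in Hj.
    inversion E; subst. lia.
  - intros H. exists (j + k)%nat. split. apply in_seq; lia. apply in_map_iff. exists j. split.
    f_equal; lia. apply in_seq; lia. Qed.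
Lemma NoDup_SQ N : NoDup (SQ N).
Proof. apply NoDup_list_prod'; apply seq_NoDup. Qed.
Lemma NoDup_TL N : NoDup (TL N).
Proof. unfold TL. apply NoDup_flat_map'. apply seq_NoDup.
  - intros n _. apply NoDup_map_inj'. intros x y E; inversion E; auto. apply seq_NoDup.
  - intros x y z Hx Hy Hxy Hz Hz'. apply in_map_iff in Hz as [a [<- Ha]]. apply in_map_iff in Hz' as [b [E Hb]].
    apply in_seq in Ha; apply in_seq in Hb. inversion E; subst. lia. Qed.

Lemma rs_SQ f N : rs (fun p => f (fst p) (snd p)) (SQ N) = sum_f_R0 (fun j => sum_f_R0 (fun k => f j k) N) N.
Proof. unfold SQ. rewrite rs_list_prod. rewrite <- rs_seq. apply rs_ext; intros. simpl. apply rs_seq. Qed.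
Lemma rs_TL f N : rs (fun p => f (fst p) (snd p)) (TL N) = sum_f_R0 (fun n => sum_f_R0 (fun j => f j (n - j)%nat) n) N.
Proof. unfold TL. rewrite rs_flat_map. rewrite <- rs_seq. apply rs_ext; intros. rewrite rs_map. simpl. apply rs_seq. Qed.

Lemma sq_mono (g : nat * nat -> R) N M : (N <= M)%nat -> (forall p, 0 <= g p) -> rs g (SQ N) <= rs g (SQ M).
Proof. intros H Hg. apply rs_incl_le; auto using NoDup_SQ. intros [j k] Hp. apply in_SQ in Hp; apply in_SQ; lia. Qed.

Lemma sq_abs_cv (g : nat * nat -> R) B : (forall N, rs (fun p => Rabs (g p)) (SQ N) <= B) ->
  Cauchy_crit (fun N => rs (fun p => Rabs (g p)) (SQ N)).
Proof. intros HB. apply CV_Cauchy. apply growing_cv.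
  intros N. apply sq_mono; [lia|intros; apply Rabs_pos]. exists B. intros x [N ->]. auto. Qed.

Lemma sq_cauchy (g : nat * nat -> R) B : (forall N, rs (fun p => Rabs (g p)) (SQ N) <= B) ->
  Cauchy_crit (fun N => rs g (SQ N)).
Proof. intros HB eps He. destruct (sq_abs_cv g B HB eps He) as [N0 H0]. exists N0. intros n m Hn Hm.
  specialize (H0 n m Hn Hm). unfold R_dist in *.
  assert (G : forall N M, (N <= M)%nat -> Rabs (rs g (SQ M) - rs g (SQ N)) <=
        rs (fun p => Rabs (g p)) (SQ M) - rs (fun p => Rabs (g p)) (SQ N)).
  { intros N M H. apply rs_diff_le; auto using NoDup_SQ. intros [j k] Hp. apply in_SQ in Hp; apply in_SQ; lia. }
  destruct (le_dec n m).
  - specialize (G n m l). rewrite Rabs_minus_sym. eapply Rle_lt_trans; [apply G|].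
    rewrite Rabs_minus_sym in H0. eapply Rle_lt_trans; [apply Rle_abs|auto].
  - specialize (G m n ltac:(lia)). eapply Rle_lt_trans; [apply G|].
    eapply Rle_lt_trans; [apply Rle_abs|auto]. Qed.

Lemma sq_tri (g : nat * nat -> R) B : (forall N, rs (fun p => Rabs (g p)) (SQ N) <= B) ->
  Un_cv (fun N => rs g (SQ N) - rs g (TL N)) 0.
Proof. intros HB eps He. destruct (sq_abs_cv g B HB eps He) as [N0 H0]. exists (2 * N0)%nat. intros n Hn.
  unfold R_dist. rewrite Rminus_0_r.
  assert (I1 : incl (TL n) (SQ n)).
  { intros [j k] Hp. apply in_TL in Hp; apply in_SQ; lia. }
  assert (I2 : incl (SQ (Nat.div2 n)) (TL n)).
  { intros [j k] Hp. apply in_SQ in Hp; apply in_TL. pose proof (Nat.div2_odd n). destruct (Nat.odd n); simpl in *; lia. }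
  pose proof (rs_diff_le g _ _ (NoDup_TL n) (NoDup_SQ n) I1).
  pose proof (rs_incl_le (fun p => Rabs (g p)) _ _ (fun _ => Rabs_pos _) (NoDup_SQ _) (NoDup_TL n) I2).
  assert (Nat.div2 n >= N0)%nat by (pose proof (Nat.div2_odd n); destruct (Nat.odd n); simpl in *; lia).
  specialize (H0 n (Nat.div2 n) ltac:(lia) ltac:(lia)). unfold R_dist in H0.
  pose proof (Rle_abs (rs (fun p => Rabs (g p)) (SQ n) - rs (fun p => Rabs (g p)) (SQ (Nat.div2 n)))).
  lra. Qed.

Lemma pow_le1 x n : 0 <= x <= 1 -> x ^ n <= 1.
Proof. intros H; induction n; simpl; [lra|]. pose proof (pow_le x n ltac:(lra)). nra. Qed.

Lemma lim_le (u : nat -> R) l a K : Un_cv u l -> (forall N, Rabs (u N - a) <= K) -> Rabs (l - a) <= K.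
Proof. intros H Hb. apply Rnot_lt_le; intro Hlt.
  destruct (H ((Rabs (l - a) - K)/2)) as [N HN]; [lra|]. specialize (HN N (le_n _)). specialize (Hb N).
  unfold Rdist in HN. pose proof (Rabs_triang (u N - a) (l - u N)).
  replace (u N - a + (l - u N)) with (l - a) in H0 by ring. rewrite Rabs_minus_sym in HN. lra. Qed.

Lemma lim_le_ev (u : nat -> R) l a K N0 : Un_cv u l -> (forall N, (N0 <= N)%nat -> Rabs (u N - a) <= K) -> Rabs (l - a) <= K.
Proof. intros H Hb. apply (lim_le (fun N => u (N + N0)%nat)). 
  intros eps He. destruct (H eps He) as [N HN]. exists N. intros n Hn. apply HN. lia.
  intros N; apply Hb; lia. Qed.

Lemma taylor1_abs c F r : taylor1 c F -> 0 < r ->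
  exists B, forall N, sum_f_R0 (fun k => Rabs (c k) * r ^ k) N <= B.
Proof. intros HT Hr. assert (H2r : 2 * r <> 0) by lra. specialize (HT (2 * r) H2r).
  destruct (HT (1/2) ltac:(lra)) as [N0 HN0].
  assert (Ht : forall k, (S N0 <= k)%nat -> Rabs (c k) * r ^ k <= (/2) ^ k).
  { intros k Hk. destruct k; [lia|].
    pose proof (HN0 (S k) ltac:(lia)); pose proof (HN0 k ltac:(lia)). unfold Rdist in *.
    rewrite tech5 in H. 
    assert (Rabs (c (S k) * (2 * r) ^ S k) < 1).
    { pose proof (Rabs_triang (sum_f_R0 (fun n => c n * (2 * r) ^ n) k + c (S k) * (2 * r) ^ S k - F (2 * r))
        (- (sum_f_R0 (fun n => c n * (2 * r) ^ n) k - F (2 * r)))).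
      rewrite Rabs_Ropp in H1. 
      replace (sum_f_R0 (fun n => c n * (2 * r) ^ n) k + c (S k) * (2 * r) ^ S k - F (2 * r) +
        - (sum_f_R0 (fun n => c n * (2 * r) ^ n) k - F (2 * r))) with (c (S k) * (2 * r) ^ S k) in H1 by ring.
      lra. }
    rewrite Rabs_mult, Rpow_mult_distr, Rabs_mult, (Rabs_right (r ^ S k)) in H1 by (apply Rle_ge, pow_le; lra).
    rewrite (Rabs_right (2 ^ S k)) in H1 by (apply Rle_ge, pow_le; lra).
    assert (0 < 2 ^ S k) by (apply pow_lt; lra).
    rewrite pow_inv.
    apply (Rmult_le_reg_r (2 ^ S k)); auto. rewrite Rinv_l by lra. nra. }
  set (S' := sum_f_R0 (fun k => Rabs (c k) * r ^ k)).
  assert (Hmono : forall N M, (N <= M)%nat -> S' N <= S' M).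
  { intros N M H. induction H; [lra|]. unfold S' in *; rewrite tech5.
    pose proof (Rabs_pos (c (S m))); pose proof (pow_le r (S m) ltac:(lra)). nra. }
  assert (Htail : forall m, S' (N0 + m)%nat <= S' N0 + 1 - (/2) ^ (N0 + m)).
  { induction m. rewrite Nat.add_0_r. pose proof (pow_le (/2) N0 ltac:(lra)).
    assert ((/2) ^ N0 <= 1) by (apply pow_le1; lra). lra.
    replace (N0 + S m)%nat with (S (N0 + m)) by lia. unfold S' in *. rewrite tech5.
    specialize (Ht (S (N0 + m)) ltac:(lia)). simpl ((/2) ^ S (N0 + m)) in *. lra. }
  exists (S' N0 + 1). intros N. fold S'. destruct (le_dec N0 N).
  - replace N with (N0 + (N - N0))%nat by lia. pose proof (Htail (N - N0)%nat).
    pose proof (pow_le (/2) (N0 + (N - N0)) ltac:(lra)). lra.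
  - pose proof (Hmono N N0 ltac:(lia)). lra. Qed.

Lemma taylor1_cauchy c F r : taylor1 c F -> 0 < r -> Cauchy_crit (sum_f_R0 (fun k => Rabs (c k) * r ^ k)).
Proof. intros HT Hr. destruct (taylor1_abs c F r HT Hr) as [B HB]. apply CV_Cauchy, growing_cv.
  intros N; rewrite tech5. pose proof (Rabs_pos (c (S N))); pose proof (pow_le r (S N) ltac:(lra)). nra.
  exists B. intros x [N ->]; auto. Qed.

Lemma sum_drop0 (f : nat -> R) N : sum_f_R0 f N - f O = sum_f_R0 (fun k => match k with O => 0 | _ => f k end) N.
Proof. induction N; simpl. ring. rewrite <- IHN. ring. Qed.

Lemma taylor1_c0 c F L : taylor1 c F ->
  (forall eps, 0 < eps -> exists delta, 0 < delta /\ forall s, s <> 0 -> Rabs s < delta -> Rabs (F s - L) < eps) ->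
  c O = L.
Proof. intros HT HL. destruct (taylor1_abs c F 1 HT ltac:(lra)) as [B HB].
  assert (HB0 : 0 <= B) by (eapply Rle_trans; [|apply (HB O)]; simpl; rewrite Rmult_1_r; apply Rabs_pos).
  assert (Hs : forall s, s <> 0 -> Rabs s <= 1 -> Rabs (F s - c O) <= Rabs s * B).
  { intros s Hs0 Hs1. apply (lim_le (sum_f_R0 (fun n => c n * s ^ n))). apply HT; auto.
    intros N. replace (c O) with (c O * s ^ 0) by (simpl; ring). rewrite sum_drop0.
    eapply Rle_trans; [apply sum_f_R0_triangle|].
    apply Rle_trans with (sum_f_R0 (fun k => Rabs s * (Rabs (c k) * 1 ^ k)) N).
    { apply sum_Rle. intros [|k] _. rewrite Rabs_R0. pose proof (Rabs_pos s); pose proof (Rabs_pos (c O)); simpl; nra.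
      rewrite Rabs_mult, <- RPow_abs, pow1. simpl. rewrite Rmult_1_r.
      pose proof (pow_le (Rabs s) k (Rabs_pos s)). pose proof (pow_le1 (Rabs s) k (conj (Rabs_pos s) Hs1)).
      pose proof (Rabs_pos (c (S k))). pose proof (Rabs_pos s).
      assert (Rabs (c (S k)) * Rabs s * (Rabs s ^ k) <= Rabs (c (S k)) * Rabs s * 1)
        by (apply Rmult_le_compat_l; [apply Rmult_le_pos|]; auto). 
      replace (Rabs (c (S k)) * (Rabs s * Rabs s ^ k)) with (Rabs (c (S k)) * Rabs s * (Rabs s ^ k)) by ring. lra. }
    rewrite (sum_eq _ (fun k => (Rabs (c k) * 1 ^ k) * Rabs s)) by (intros; ring).
    rewrite <- scal_sum. apply Rmult_le_compat_l. apply Rabs_pos. apply HB. }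
  apply Rle_antisym; apply Rnot_lt_le; intro Hlt.
  - set (e := (c O - L) / 2). destruct (HL e ltac:(unfold e; lra)) as [d [Hd Hd']].
    set (s := Rmin (d / 2) (Rmin 1 (e / (B + 1)))).
    assert (0 < s) by (unfold s; repeat apply Rmin_pos; try lra; apply Rdiv_lt_0_compat; unfold e; lra).
    assert (s <= d / 2) by apply Rmin_l. assert (s <= 1) by (unfold s; eapply Rle_trans; [apply Rmin_r|apply Rmin_l]).
    assert (s <= e / (B + 1)) by (unfold s; eapply Rle_trans; [apply Rmin_r|apply Rmin_r]).
    specialize (Hd' s ltac:(lra) ltac:(rewrite Rabs_right; lra)). specialize (Hs s ltac:(lra) ltac:(rewrite Rabs_right; lra)).
    rewrite (Rabs_right s) in Hs by lra.
    assert (s * B <= e * B / (B + 1)) by (apply Rle_trans with (e / (B + 1) * B); [apply Rmult_le_compat_r; lra|right; field; lra]).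
    assert (e * B / (B + 1) <= e) by (apply (Rmult_le_reg_r (B + 1)); [lra|]; field_simplify; [unfold e; nra|lra]).
    apply Rabs_le_inv in Hs. apply Rabs_def2 in Hd'. unfold e in *. lra.
  - set (e := (L - c O) / 2). destruct (HL e ltac:(unfold e; lra)) as [d [Hd Hd']].
    set (s := Rmin (d / 2) (Rmin 1 (e / (B + 1)))).
    assert (0 < s) by (unfold s; repeat apply Rmin_pos; try lra; apply Rdiv_lt_0_compat; unfold e; lra).
    assert (s <= d / 2) by apply Rmin_l. assert (s <= 1) by (unfold s; eapply Rle_trans; [apply Rmin_r|apply Rmin_l]).
    assert (s <= e / (B + 1)) by (unfold s; eapply Rle_trans; [apply Rmin_r|apply Rmin_r]).
    specialize (Hd' s ltac:(lra) ltac:(rewrite Rabs_right; lra)). specialize (Hs s ltac:(lra) ltac:(rewrite Rabs_right; lra)).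
    rewrite (Rabs_right s) in Hs by lra.
    assert (s * B <= e * B / (B + 1)) by (apply Rle_trans with (e / (B + 1) * B); [apply Rmult_le_compat_r; lra|right; field; lra]).
    assert (e * B / (B + 1) <= e) by (apply (Rmult_le_reg_r (B + 1)); [lra|]; field_simplify; [unfold e; nra|lra]).
    apply Rabs_le_inv in Hs. apply Rabs_def2 in Hd'. unfold e in *. lra. Qed.

Lemma Kf_lim : forall eps, 0 < eps -> exists delta, 0 < delta /\ forall s, s <> 0 -> Rabs s < delta -> Rabs (Kf s - 1/2) < eps.
Proof. intros eps He. destruct (derivable_pt_lim_exp 0 eps He) as [d Hd]. exists d; split; [apply cond_pos|].
  intros s Hs Hsd. specialize (Hd (- s) ltac:(lra) ltac:(rewrite Rabs_Ropp; auto)).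
  rewrite exp_0, Rplus_0_l in Hd. unfold Kf.
  replace ((1 - exp (- s)) / (2 * s) - 1 / 2) with (((exp (- s) - 1) / - s - 1) / 2) by (field; auto).
  unfold Rdiv at 1. rewrite Rabs_mult. rewrite (Rabs_right (/2)) by lra. lra. Qed.

Definition dH (cH : nat -> nat -> R) (n : nat) : R := sum_f_R0 (fun j => cH j (n - j)%nat * (-1) ^ (n - j)) n.

Lemma pow_neg s k : (- s) ^ k = (-1) ^ k * s ^ k.
Proof. induction k; simpl; [ring|]. rewrite IHk; ring. Qed.

Lemma taylor2_abs cH r : taylor2 cH Hf -> 0 < r ->
  exists M, forall N, rs (fun p => Rabs (cH (fst p) (snd p)) * r ^ (fst p) * r ^ (snd p)) (SQ N) <= M.
Proof. intros HH Hr. destruct (HH r r ltac:(lra) ltac:(lra) ltac:(lra)) as [_ [M HM]].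
  exists M. intros N. rewrite (rs_SQ (fun j k => Rabs (cH j k) * r ^ j * r ^ k)).
  eapply Rle_trans; [|apply (HM N)]. right. apply sum_eq; intros; apply sum_eq; intros.
  rewrite !Rabs_mult, !(Rabs_right (r ^ _)) by (apply Rle_ge, pow_le; lra). ring. Qed.

Lemma tri_dH cH s N : rs (fun p => cH (fst p) (snd p) * s ^ (fst p) * (- s) ^ (snd p)) (TL N) =
  sum_f_R0 (fun n => dH cH n * s ^ n) N.
Proof. rewrite (rs_TL (fun j k => cH j k * s ^ j * (- s) ^ k)). apply sum_eq; intros n _.
  unfold dH. rewrite Rmult_comm, scal_sum. apply sum_eq; intros j Hj.
  rewrite pow_neg. assert (E : s ^ n = s ^ j * s ^ (n - j)) by (rewrite <- pow_add; f_equal; lia).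
  rewrite E. ring. Qed.

Lemma sq_abs_bound cH s : taylor2 cH Hf -> s <> 0 ->
  exists M, forall N, rs (fun p => Rabs (cH (fst p) (snd p) * s ^ (fst p) * (- s) ^ (snd p))) (SQ N) <= M.
Proof. intros HH Hs. destruct (taylor2_abs cH (Rabs s) HH (Rabs_pos_lt _ Hs)) as [M HM]. exists M. intros N.
  eapply Rle_trans; [|apply (HM N)]. right. apply rs_ext; intros.
  rewrite !Rabs_mult, <- !RPow_abs, Rabs_Ropp; reflexivity. Qed.

Lemma dH_sum_cv cH s : taylor2 cH Hf -> s <> 0 ->
  exists P, Un_cv (fun N => rs (fun p => cH (fst p) (snd p) * s ^ (fst p) * (- s) ^ (snd p)) (SQ N)) P /\
            Un_cv (sum_f_R0 (fun n => dH cH n * s ^ n)) P.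
Proof. intros HH Hs. destruct (sq_abs_bound cH s HH Hs) as [M HM].
  destruct (R_complete _ (sq_cauchy _ M HM)) as [P HP]. exists P. split; auto.
  pose proof (sq_tri _ M HM) as HT.
  pose proof (CV_minus _ _ _ _ HP HT). rewrite Rminus_0_r in H.
  eapply Un_cv_ext; [|apply H]. intros N; simpl. rewrite tri_dH. ring. Qed.

Lemma INR_le_pow2 k : INR k <= 2 ^ k.
Proof. induction k. simpl; lra. rewrite S_INR. change (2 ^ S k) with (2 * 2 ^ k).
  pose proof (pow_R1_Rle 2 k ltac:(lra)). lra. Qed.

Lemma pow_diff t u rho k : Rabs t <= rho -> Rabs u <= rho ->
  rho * Rabs (t ^ k - u ^ k) <= INR k * rho ^ k * Rabs (t - u).
Proof. intros Ht Hu. assert (Hr : 0 <= rho) by (pose proof (Rabs_pos t); lra).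
  induction k. simpl. rewrite Rminus_diag, Rabs_R0; lra.
  replace (t ^ S k - u ^ S k) with (t * (t ^ k - u ^ k) + u ^ k * (t - u)) by (simpl; ring).
  pose proof (Rabs_triang (t * (t ^ k - u ^ k)) (u ^ k * (t - u))). rewrite !Rabs_mult in H.
  assert (Rabs (u ^ k) <= rho ^ k) by (rewrite <- RPow_abs; apply pow_incr; split; [apply Rabs_pos|auto]).
  pose proof (Rabs_pos (t ^ k - u ^ k)); pose proof (Rabs_pos (t - u)); pose proof (Rabs_pos t).
  pose proof (pow_le rho k Hr). pose proof (pos_INR k).
  assert (rho * (Rabs t * Rabs (t ^ k - u ^ k)) <= rho * (INR k * rho ^ k * Rabs (t - u))).
  { replace (rho * (Rabs t * Rabs (t ^ k - u ^ k))) with (Rabs t * (rho * Rabs (t ^ k - u ^ k))) by ring.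
    apply Rle_trans with (rho * (rho * Rabs (t ^ k - u ^ k))).
    apply Rmult_le_compat_r; [nra|auto]. apply Rmult_le_compat_l; auto. }
  assert (rho * (Rabs (u ^ k) * Rabs (t - u)) <= rho * (rho ^ k * Rabs (t - u))).
  { apply Rmult_le_compat_l; auto. apply Rmult_le_compat_r; auto. }
  rewrite S_INR. simpl. nra. Qed.

Module NfD.
From Coquelicot Require Import Rcomplements Hierarchy Derive AutoDerive.
Lemma Nf_deriv s : derivable_pt_lim
  (fun t => - (exp (- s - t) * ((- exp s - 3) * s * (exp t - 1) + (exp s - 1) * (3 * exp t + 1) * t)))
  (- s) (4 * s - exp s + 3 * exp (- s) - 2).
Proof. apply is_derive_Reals. auto_derive. auto.
  replace (- s + - - s) with 0 by ring. rewrite exp_0.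
  assert (E : exp s * exp (- s) = 1) by (rewrite <- exp_plus; replace (s + - s) with 0 by ring; apply exp_0).
  nra. Qed.
End NfD.
Notation Nf_deriv := NfD.Nf_deriv.


Lemma P_eq_G cH s P : taylor2 cH Hf -> s <> 0 ->
  Un_cv (fun N => rs (fun p => cH (fst p) (snd p) * s ^ (fst p) * (- s) ^ (snd p)) (SQ N)) P -> P = Gf s.
Proof. intros HH Hs HP.
  set (rho := Rabs s + 1). assert (Hrho : 0 < rho) by (unfold rho; pose proof (Rabs_pos s); lra).
  assert (Hsr : Rabs s <= rho) by (unfold rho; lra).
  destruct (taylor2_abs cH (2 * rho) HH ltac:(lra)) as [M2 HM2].
  assert (HM20 : 0 <= M2).
  { eapply Rle_trans; [|apply (HM2 O)]. apply rs_ge0; intros. pose proof (Rabs_pos (cH (fst x) (snd x))).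
    pose proof (pow_le (2 * rho) (fst x) ltac:(lra)). pose proof (pow_le (2 * rho) (snd x) ltac:(lra)).
    apply Rmult_le_pos; [apply Rmult_le_pos|]; auto. }
  assert (Hclose : forall t, t <> 0 -> s + t <> 0 -> Rabs t <= rho -> Rabs (Hf s t - P) <= Rabs (t + s) * M2 / rho).
  { intros t Ht Hst Htr.
    destruct (HH s t Hs Ht Hst) as [Hcv _].
    assert (Hcv' : Un_cv (fun N => rs (fun p => cH (fst p) (snd p) * s ^ (fst p) * t ^ (snd p)) (SQ N)) (Hf s t)).
    { eapply Un_cv_ext; [|apply Hcv]. intros N; simpl. symmetry. apply (rs_SQ (fun j k => cH j k * s ^ j * t ^ k)). }
    pose proof (CV_minus _ _ _ _ Hcv' HP) as HD.
    rewrite <- (Rminus_0_r (Hf s t - P)). apply (lim_le _ _ 0 _ HD). intros N. rewrite Rminus_0_r.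
    replace (rs (fun p => cH (fst p) (snd p) * s ^ fst p * t ^ snd p) (SQ N) -
      rs (fun p => cH (fst p) (snd p) * s ^ fst p * (- s) ^ snd p) (SQ N))
      with (rs (fun p => cH (fst p) (snd p) * s ^ fst p * (t ^ snd p - (- s) ^ snd p)) (SQ N))
      by (unfold Rminus; rewrite <- rs_opp, <- rs_plus; apply rs_ext; intros; ring).
    eapply Rle_trans; [apply rs_abs|].
    apply (Rmult_le_reg_l rho); auto. rewrite <- rs_scal.
    apply Rle_trans with (rs (fun p => Rabs (t + s) * (Rabs (cH (fst p) (snd p)) * (2 * rho) ^ fst p * (2 * rho) ^ snd p)) (SQ N)).
    { apply rs_le. intros [j k] _. simpl. rewrite !Rabs_mult.
      pose proof (pow_diff t (- s) rho k Htr ltac:(rewrite Rabs_Ropp; auto)) as Hd.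
      replace (t - - s) with (t + s) in Hd by ring.
      assert (Hsj : Rabs (s ^ j) <= (2 * rho) ^ j) by (rewrite <- RPow_abs; apply pow_incr; split; [apply Rabs_pos|lra]).
      assert (Hk : INR k * rho ^ k <= (2 * rho) ^ k).
      { rewrite Rpow_mult_distr. apply Rmult_le_compat_r. apply pow_le; lra. apply INR_le_pow2. }
      pose proof (Rabs_pos (cH j k)); pose proof (Rabs_pos (s ^ j)); pose proof (Rabs_pos (t + s));
      pose proof (Rabs_pos (t ^ k - (- s) ^ k)); pose proof (pos_INR k); pose proof (pow_le rho k ltac:(lra)).
      replace (rho * (Rabs (cH j k) * Rabs (s ^ j) * Rabs (t ^ k - (- s) ^ k)))
        with (Rabs (cH j k) * Rabs (s ^ j) * (rho * Rabs (t ^ k - (- s) ^ k))) by ring.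
      apply Rle_trans with (Rabs (cH j k) * Rabs (s ^ j) * (INR k * rho ^ k * Rabs (t + s))).
      { apply Rmult_le_compat_l; auto. apply Rmult_le_pos; auto. }
      replace (Rabs (t + s) * (Rabs (cH j k) * (2 * rho) ^ j * (2 * rho) ^ k)) with
        (Rabs (cH j k) * (2 * rho) ^ j * ((2 * rho) ^ k * Rabs (t + s))) by ring.
      apply Rmult_le_compat; try (apply Rmult_le_pos; auto; try apply Rmult_le_pos; auto).
      apply Rmult_le_compat_l; auto. apply Rmult_le_compat_r; auto. }
    rewrite rs_scal. replace (rho * (Rabs (t + s) * M2 / rho)) with (Rabs (t + s) * M2) by (field; lra).
    apply Rmult_le_compat_l; [apply Rabs_pos|]. apply HM2. }
  set (Np := 4 * s - exp s + 3 * exp (- s) - 2).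
  assert (Hfin : forall eps, 0 < eps -> Rabs (Np + 4 * s ^ 2 * P) <= eps).
  { intros eps He.
    set (Nf := fun t0 => - (exp (- s - t0) * ((- exp s - 3) * s * (exp t0 - 1) + (exp s - 1) * (3 * exp t0 + 1) * t0))).
    assert (HD : derivable_pt_lim Nf (- s) Np) by apply Nf_deriv.
    destruct (HD (eps / 2) ltac:(lra)) as [d Hd].
    set (K := 4 * M2 * Rabs s + 4 * Rabs P * Rabs s + 1).
    assert (HK : 0 < K) by (unfold K; pose proof (Rabs_pos s); pose proof (Rabs_pos P); nra).
    pose proof (cond_pos d) as Hd0. pose proof (Rabs_pos_lt s Hs) as Hs0.
    set (h := Rmin (d / 2) (Rmin (Rabs s / 2) (Rmin (1 / 2) (eps / (2 * K))))).
    assert (Hh0 : 0 < h) by (unfold h; repeat apply Rmin_pos; try lra; apply Rdiv_lt_0_compat; lra).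
    assert (Hh1 : h <= d / 2) by apply Rmin_l.
    assert (Hh2 : h <= Rabs s / 2) by (unfold h; eapply Rle_trans; [apply Rmin_r|apply Rmin_l]).
    assert (Hh3 : h <= 1 / 2) by (unfold h; eapply Rle_trans; [apply Rmin_r|]; eapply Rle_trans; [apply Rmin_r|apply Rmin_l]).
    assert (Hh4 : h <= eps / (2 * K)) by (unfold h; eapply Rle_trans; [apply Rmin_r|]; eapply Rle_trans; [apply Rmin_r|apply Rmin_r]).
    clearbody h.
    set (t := - s + h).
    assert (Ht0 : t <> 0).
    { unfold t; intro E. assert (h = s) by lra. subst h. rewrite Rabs_right in Hh2 by lra. lra. }
    assert (Hst : s + t <> 0) by (unfold t; lra).
    assert (Htr : Rabs t <= rho).
    { unfold t, rho. eapply Rle_trans; [apply Rabs_triang|]. rewrite Rabs_Ropp, (Rabs_right h) by lra. lra. }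
    specialize (Hclose t Ht0 Hst Htr). replace (t + s) with h in Hclose by (unfold t; ring).
    rewrite (Rabs_right h) in Hclose by lra.
    specialize (Hd h ltac:(lra) ltac:(rewrite Rabs_right; lra)).
    assert (HN0 : Nf (- s) = 0).
    { unfold Nf. replace (- s - - s) with 0 by ring. rewrite exp_0.
      assert (E : exp s * exp (- s) = 1) by (rewrite <- exp_plus; replace (s + - s) with 0 by ring; apply exp_0).
      replace ((- exp s - 3) * s * (exp (- s) - 1) + (exp s - 1) * (3 * exp (- s) + 1) * - s)
        with (4 * s * (1 - exp s * exp (- s))) by ring. rewrite E. ring. }
    rewrite HN0, Rminus_0_r in Hd.
    assert (EQ : Np + 4 * s ^ 2 * P = (Np - Nf (- s + h) / h) + (Hf s t - P) * (4 * s * t) + P * (4 * s * h)).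
    { unfold Hf, Nf, t. field. repeat split; try lra. unfold t in Ht0; auto. }
    rewrite EQ.
    eapply Rle_trans; [apply Rabs_triang|]. eapply Rle_trans; [apply Rplus_le_compat_r; apply Rabs_triang|].
    rewrite Rabs_minus_sym in Hd. rewrite !Rabs_mult.
    assert (Rabs (Hf s t - P) * (Rabs 4 * Rabs s * Rabs t) <= h * M2 / rho * (4 * Rabs s * rho)).
    { rewrite (Rabs_right 4) by lra. apply Rmult_le_compat; auto.
      apply Rabs_pos. pose proof (Rabs_pos t); nra. nra. }
    assert (h * M2 / rho * (4 * Rabs s * rho) = h * (4 * M2 * Rabs s)) by (field; lra).
    rewrite (Rabs_right 4) by lra. rewrite (Rabs_right h) by lra.
    assert (h * K <= eps / 2).
    { apply (Rmult_le_reg_r (2 * K)); [lra|]. apply Rle_trans with (eps / (2 * K) * (2 * K) * K).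
      nra. right; field; lra. }
    assert (h * K = h * (4 * M2 * Rabs s) + Rabs P * (4 * Rabs s * h) + h) by (unfold K; ring).
    rewrite (Rabs_right 4) in H by lra. lra. }
  assert (HZ : Np + 4 * s ^ 2 * P = 0).
  { destruct (Req_dec (Np + 4 * s ^ 2 * P) 0) as [E|E]; auto. exfalso.
    pose proof (Hfin (Rabs (Np + 4 * s ^ 2 * P) / 2) ltac:(apply Rdiv_lt_0_compat; [apply Rabs_pos_lt; auto|lra])). 
    pose proof (Rabs_pos_lt _ E). lra. }
  unfold Gf. unfold Np in HZ. apply (Rmult_eq_reg_r (4 * s ^ 2)). 2: { apply Rmult_integral_contrapositive; split; [lra|apply pow_nonzero; auto]. }
  field_simplify; [|auto]. lra. Qed.

Lemma sum_single a n N : sum_f_R0 (fun k => if Nat.eqb k n then a else 0) N = if Nat.leb n N then a else 0.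
Proof. induction N.
  - simpl. destruct n; simpl; auto.
  - rewrite tech5, IHN. destruct (Nat.leb_spec n N); destruct (Nat.eqb_spec (S N) n);
    destruct (Nat.leb_spec n (S N)); try lia; ring. Qed.

Lemma dH_eq_cG cH cG : taylor2 cH Hf -> taylor1 cG Gf -> forall n, dH cH n = cG n.
Proof. intros HH HG.
  set (e := fun n => dH cH n - cG n).
  assert (Hcv0 : forall s, s <> 0 -> Un_cv (sum_f_R0 (fun n => e n * s ^ n)) 0).
  { intros s Hs. destruct (dH_sum_cv cH s HH Hs) as [P [HP1 HP2]].
    rewrite (P_eq_G cH s P HH Hs HP1) in HP2.
    assert (HG' : Un_cv (sum_f_R0 (fun n => cG n * s ^ n)) (Gf s)) by (apply (HG s Hs)).
    pose proof (CV_minus _ _ _ _ HP2 HG') as H. rewrite Rminus_diag in H.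
    eapply Un_cv_ext; [|apply H]. intros N; simpl. rewrite <- minus_sum. apply sum_eq; intros; unfold e; ring. }
  assert (Hbnd : exists B, forall N, sum_f_R0 (fun n => Rabs (e n)) N <= B).
  { destruct (taylor1_abs cG Gf 1 HG ltac:(lra)) as [BG HBG].
    destruct (taylor2_abs cH 1 HH ltac:(lra)) as [M HM].
    exists (M + BG). intros N.
    apply Rle_trans with (sum_f_R0 (fun n => Rabs (dH cH n)) N + sum_f_R0 (fun n => Rabs (cG n)) N).
    { rewrite <- plus_sum. apply sum_Rle; intros. unfold e. unfold Rminus.
      pose proof (Rabs_triang (dH cH n) (- cG n)). rewrite Rabs_Ropp in H0. lra. }
    apply Rplus_le_compat.
    - apply Rle_trans with (rs (fun p => Rabs (cH (fst p) (snd p)) * 1 ^ (fst p) * 1 ^ (snd p)) (TL N)).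
      { rewrite (rs_TL (fun j k => Rabs (cH j k) * 1 ^ j * 1 ^ k)). apply sum_Rle; intros n _.
        unfold dH. eapply Rle_trans; [apply sum_f_R0_triangle|]. right. apply sum_eq; intros.
        rewrite Rabs_mult, pow_1_abs, !pow1. ring. }
      eapply Rle_trans; [|apply (HM N)]. apply rs_incl_le; auto using NoDup_TL, NoDup_SQ.
      intros; rewrite !pow1; rewrite !Rmult_1_r; apply Rabs_pos.
      intros [j k] Hp. apply in_TL in Hp; apply in_SQ; lia.
    - eapply Rle_trans; [|apply (HBG N)]. right. apply sum_eq; intros; rewrite pow1; ring. }
  destruct Hbnd as [B HB].
  assert (HB0 : 0 <= B) by (eapply Rle_trans; [|apply (HB O)]; simpl; apply Rabs_pos).
  intros n. induction n as [n IH] using (well_founded_induction lt_wf).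
  assert (Hen : forall s, 0 < s <= 1 -> Rabs (e n) <= s * B).
  { intros s Hs.
    assert (Hlim : Rabs (0 - e n * s ^ n) <= s ^ (S n) * B).
    { apply (lim_le_ev (sum_f_R0 (fun k => e k * s ^ k)) 0 (e n * s ^ n) _ n); [apply Hcv0; lra|].
      intros N HN.
      assert (Hsplit : sum_f_R0 (fun k => e k * s ^ k) N - e n * s ^ n =
        sum_f_R0 (fun k => if Nat.eqb k n then 0 else e k * s ^ k) N).
      { replace (e n * s ^ n) with (sum_f_R0 (fun k => if Nat.eqb k n then e n * s ^ n else 0) N).
        rewrite <- minus_sum. apply sum_eq; intros k _. destruct (Nat.eqb_spec k n); subst; ring.
        rewrite sum_single. apply Nat.leb_le in HN. rewrite HN; auto. }
      rewrite Hsplit. eapply Rle_trans; [apply sum_f_R0_triangle|].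
      apply Rle_trans with (sum_f_R0 (fun k => Rabs (e k) * s ^ S n) N).
      2: { rewrite <- scal_sum. apply Rmult_le_compat_l; [apply pow_le; lra|apply HB]. }
      apply sum_Rle. intros k _. destruct (Nat.eqb_spec k n).
      - rewrite Rabs_R0. pose proof (Rabs_pos (e k)); pose proof (pow_le s (S n) ltac:(lra)). nra.
      - destruct (Nat.lt_ge_cases k n).
        + assert (Hek : e k = 0) by (apply IH in H; unfold e; lra). rewrite Hek, Rmult_0_l, Rabs_R0.
          pose proof (pow_le s (S n) ltac:(lra)). rewrite ?Rmult_0_l. lra.
        + rewrite Rabs_mult, (Rabs_right (s ^ k)) by (apply Rle_ge, pow_le; lra).
          apply Rmult_le_compat_l. apply Rabs_pos.
          replace k with (S n + (k - S n))%nat by lia. rewrite pow_add.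
          pose proof (pow_le1 s (k - S n) ltac:(lra)). pose proof (pow_le s (S n) ltac:(lra)).
          pose proof (pow_le s (k - S n) ltac:(lra)). nra. }
    rewrite Rminus_0_l, Rabs_Ropp, Rabs_mult, (Rabs_right (s ^ n)) in Hlim by (apply Rle_ge, pow_le; lra).
    simpl in Hlim. assert (0 < s ^ n) by (apply pow_lt; lra).
    apply (Rmult_le_reg_r (s ^ n)); auto. nra. }
  assert (e n = 0).
  { destruct (Req_dec (e n) 0) as [E|E]; auto. exfalso. pose proof (Rabs_pos_lt _ E).
    set (s := Rmin 1 (Rabs (e n) / (2 * (B + 1)))).
    assert (0 < s) by (unfold s; apply Rmin_pos; [lra|apply Rdiv_lt_0_compat; lra]).
    assert (s <= 1) by apply Rmin_l. assert (s <= Rabs (e n) / (2 * (B + 1))) by apply Rmin_r.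
    specialize (Hen s ltac:(lra)).
    assert (s * B <= Rabs (e n) / 2).
    { apply Rle_trans with (Rabs (e n) / (2 * (B + 1)) * B). apply Rmult_le_compat_r; auto.
      apply (Rmult_le_reg_r (2 * (B + 1))); [lra|]. field_simplify; nra. }
    lra. }
  unfold e in H; lra. Qed.

Lemma Ccv_unique u l1 l2 : Ccv u l1 -> Ccv u l2 -> l1 = l2.
Proof. intros H1 H2. rewrite <- (Clim_eq _ _ H1). apply Clim_eq; auto. Qed.

Lemma Ccv_ext u v l : (forall N, u N = v N) -> Ccv u l -> Ccv v l.
Proof. intros E [A B]; split; eapply Un_cv_ext; eauto; intros; simpl; rewrite E; auto. Qed.

Lemma Cauchy_crit_ext (u v : nat -> R) : (forall N, u N = v N) -> Cauchy_crit u -> Cauchy_crit v.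
Proof. intros E H eps He. destruct (H eps He) as [N HN]. exists N. intros; rewrite <- !E; auto. Qed.

Lemma cauchy_scal (a : nat -> R) C : Cauchy_crit (sum_f_R0 a) -> Cauchy_crit (sum_f_R0 (fun k => a k * C)).
Proof. intros H. apply CV_Cauchy. destruct (R_complete _ H) as [l Hl]. exists (l * C).
  eapply Un_cv_ext; [|apply (CV_mult _ (fun _ => C) _ _ Hl)]; [|intros eps He; exists O; intros; unfold Rdist; rewrite Rminus_diag, Rabs_R0; lra]. intros N; simpl. rewrite Rmult_comm. apply scal_sum. Qed.

Lemma Csum_list_prod {T U} (f : T * U -> C) l1 l2 :
  Csum (map f (list_prod l1 l2)) = Csum (map (fun x => Csum (map (fun y => f (x, y)) l2)) l1).
Proof. apply C_ext; rewrite ?Csum_fst, ?Csum_snd, rs_list_prod; apply rs_ext; intros; rewrite ?Csum_fst, ?Csum_snd; auto. Qed.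

Section Fin.
Variable theta : nat -> nat -> R.
Notation mul := (mul theta).

Lemma L1_Csum_gen {I} (c : I -> R) (v : I -> NCT) L : (forall k, L1 (v k)) ->
  L1 (fun n => Csum (map (fun k => Cscal (c k) (v k n)) L)).
Proof. intros Hv. induction L; simpl. apply L1_zero.
  apply (L1_add (scal (c a) (v a))); auto. apply L1_scal; auto. Qed.

Lemma mul_Csum_gen {I} e (c : I -> R) (v : I -> NCT) L : L1 e -> (forall k, L1 (v k)) ->
  mul e (fun n => Csum (map (fun k => Cscal (c k) (v k n)) L)) =
  (fun n => Csum (map (fun k => Cscal (c k) (mul e (v k) n)) L)).
Proof. intros He Hv. induction L; simpl. apply mul_0R; auto.
  change (fun n => Cadd (Cscal (c a) (v a n)) (Csum (map (fun k => Cscal (c k) (v k n)) L)))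
    with (add (scal (c a) (v a)) (fun n => Csum (map (fun k => Cscal (c k) (v k n)) L))).
  rewrite mul_addR, mul_scalR, IHL; auto. apply L1_scal; auto. apply L1_Csum_gen; auto. Qed.

Lemma mul_Csum_gen_r {I} e (c : I -> R) (v : I -> NCT) L : L1 e -> (forall k, L1 (v k)) ->
  mul (fun n => Csum (map (fun k => Cscal (c k) (v k n)) L)) e =
  (fun n => Csum (map (fun k => Cscal (c k) (mul (v k) e n)) L)).
Proof. intros He Hv. induction L; simpl. apply mul_0L; auto.
  change (fun n => Cadd (Cscal (c a) (v a n)) (Csum (map (fun k => Cscal (c k) (v k n)) L)))
    with (add (scal (c a) (v a)) (fun n => Csum (map (fun k => Cscal (c k) (v k n)) L))).
  rewrite mul_addL, mul_scalL, IHL; auto. apply L1_scal; auto. apply L1_Csum_gen; auto. Qed.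

Lemma bnd_powA x K : bnd x K -> forall k, bnd (powA theta x k) ((2 * K) ^ k).
Proof. intros Hx k. induction k; simpl. eapply bnd_mono; [apply bnd_one|lra].
  eapply bnd_mono; [apply mul_bnd; eauto|]. lra. Qed.

Lemma expA_conv x K : bnd x K ->
  L1 (expA theta x) /\ conv1 (psum (fun k => / INR (fact k)) (powA theta x)) (expA theta x).
Proof. intros Hx.
  destruct (series_complete (fun k => / INR (fact k)) (powA theta x) (fun k => (2 * K) ^ k)) as [A [B _]].
  - apply bnd_powA; auto.
  - apply CV_Cauchy. destruct (exist_exp (2 * K)) as [l Hl]. exists l.
    eapply Un_cv_ext; [|apply Hl]. intros N; simpl. apply sum_eq; intros.
    rewrite Rabs_right; auto. apply Rle_ge, Rlt_le, Rinv_0_lt_compat, INR_fact_lt_0.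
  - split; [exact A|exact B]. Qed.

Lemma powA_comm x h : L1 x -> L1 h -> mul x h = mul h x -> forall k, mul (powA theta x k) h = mul h (powA theta x k).
Proof. intros Hx Hh Hc k. assert (HP : forall k, L1 (powA theta x k)).
  { induction k0; simpl. apply L1_one. apply L1_mul; auto. }
  induction k; simpl.
  - destruct Hh as [Mh Hh']. rewrite (mul_one_l theta h Mh Hh'), (mul_one_r theta h Mh Hh'). auto.
  - rewrite mulA, Hc, <- mulA, IHk, mulA; auto. Qed.

Lemma expA_comm h K : bnd h K -> mul (expA theta (opp h)) h = mul h (expA theta (opp h)).
Proof. intros Hh. assert (Hx : bnd (opp h) K) by (apply bnd_opp; auto).
  destruct (expA_conv (opp h) K Hx) as [HE Hc].
  assert (HL : L1 h) by (exists K; auto). assert (HLx : L1 (opp h)) by (exists K; auto).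
  assert (HP : forall k, L1 (powA theta (opp h) k)).
  { induction k; simpl. apply L1_one. apply L1_mul; auto. }
  assert (Hxc : mul (opp h) h = mul h (opp h)).
  { rewrite (mul_opp_l theta h h K K Hh Hh), (mul_opp_r theta h h K K Hh Hh). auto. }
  assert (HPs : forall N, L1 (psum (fun k => / INR (fact k)) (powA theta (opp h)) N)).
  { intros N; apply L1_Csum_gen; auto. }
  apply functional_extensionality; intros n.
  pose proof (conv1_mul_r theta h _ _ HL Hc HPs HE n) as A.
  pose proof (conv1_mul_l theta h _ _ HL Hc HPs HE n) as B.
  eapply Ccv_unique; [apply A|]. eapply Ccv_ext; [|apply B]. intros N. simpl.
  unfold psum. rewrite (mul_Csum_gen h), (mul_Csum_gen_r h); auto.
  f_equal. apply map_ext; intros k. rewrite (powA_comm (opp h) h); auto. Qed.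

Lemma Csum_zero {T} (f : T -> C) l : (forall x, In x l -> f x = C0) -> Csum (map f l) = C0.
Proof. induction l; intros H; simpl; auto. rewrite H by (left; auto). rewrite IHl by (intros; apply H; right; auto).
  unfold C0; Cring. Qed.

Lemma Csum_first (f : nat -> C) N : (forall j, (1 <= j)%nat -> f j = C0) -> Csum (map f (seq 0 (N + 1))) = f O.
Proof. intros H. replace (N + 1)%nat with (S N) by lia. simpl. rewrite Csum_zero. unfold C0; Cring.
  intros x Hx. apply in_seq in Hx. apply H; lia. Qed.

Lemma Ccv_const c : Ccv (fun _ => c) c.
Proof. split; intros eps He; exists O; intros; unfold Rdist; rewrite Rminus_diag, Rabs_R0; lra. Qed.

Lemma fcalc1_conv h c F a Kh Ma : taylor1 c F -> bnd h Kh -> bnd a Ma ->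
  L1 (fcalc1 theta h c a) /\ conv1 (psum c (fun j => Nat.iter j (nabla theta h) a)) (fcalc1 theta h c a).
Proof. intros HT Hh Ha. pose proof (bnd_ge0 _ _ Hh). pose proof (bnd_ge0 _ _ Ha).
  destruct (series_complete c (fun j => Nat.iter j (nabla theta h) a) (fun j => (4 * Kh + 1) ^ j * Ma)) as [A [B _]].
  - intros k. eapply bnd_mono; [apply bnd_iter; eauto|]. apply Rmult_le_compat_r; auto. apply pow_incr; lra.
  - eapply Cauchy_crit_ext. 2: apply (cauchy_scal _ Ma (taylor1_cauchy c F (4 * Kh + 1) HT ltac:(lra))).
    intros N; apply sum_eq; intros; ring.
  - split; [exact A|exact B]. Qed.

Lemma part1 h K cK X MX : taylor1 cK Kf -> bnd h K -> bnd X MX ->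
  phi0 (mul (expA theta (opp h)) (fcalc1 theta h cK X)) = Cscal (1/2) (phi0 (mul (expA theta (opp h)) X)).
Proof. intros HT Hh HX.
  destruct (expA_conv (opp h) K (bnd_opp _ _ Hh)) as [HE _].
  pose proof (expA_comm h K Hh) as Hc.
  set (E := expA theta (opp h)) in *.
  destruct (fcalc1_conv h cK Kf X K MX HT Hh HX) as [HF HcF].
  assert (HL : L1 h) by (exists K; auto). assert (HLX : L1 X) by (exists MX; auto).
  assert (HPs : forall N, L1 (psum cK (fun j => Nat.iter j (nabla theta h) X) N)).
  { intros N; apply L1_Csum_gen; intros; apply L1_iter; auto. }
  pose proof (conv1_mul_l theta E _ _ HE HcF HPs HF Z4zero) as A.
  unfold phi0. eapply Ccv_unique; [apply A|]. eapply Ccv_ext; [|apply Ccv_const]. intros N. simpl.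
  unfold psum. rewrite (mul_Csum_gen E cK (fun j => Nat.iter j (nabla theta h) X)); auto.
  2: { intros; apply L1_iter; auto. }
  symmetry. rewrite Csum_first.
  - simpl Nat.iter. rewrite (taylor1_c0 cK Kf (1/2) HT Kf_lim). reflexivity.
  - intros [|j] Hj; [lia|]. pose proof (phi0_comm_iter theta h E X j HL HE HLX Hc) as Z. unfold phi0 in Z.
    rewrite Z. unfold C0; Cring. Qed.
End Fin.

Definition QQ (c : nat * nat -> R) (W : nat * nat -> NCT) (N : nat) : NCT :=
  fun n => Csum (map (fun p => Cscal (c p) (W p n)) (SQ N)).

Lemma QQ_diff c W N M : (N <= M)%nat ->
  sub (QQ c W M) (QQ c W N) = (fun n => Csum (map (fun p => Cscal (c p) (W p n))
     (filter (fun x => if in_dec eqd x (SQ N) then false else true) (SQ M)))).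
Proof. intros H. apply functional_extensionality; intros n. unfold QQ, sub, add, opp.
  assert (I : incl (SQ N) (SQ M)) by (intros [j k] Hp; apply in_SQ in Hp; apply in_SQ; lia).
  apply C_ext; simpl; rewrite !Csum_fst || rewrite !Csum_snd;
  [rewrite (rs_split _ (SQ N) (SQ M)) by auto using NoDup_SQ
  |rewrite (rs_split _ (SQ N) (SQ M)) by auto using NoDup_SQ]; ring. Qed.

Lemma sq_conv (c : nat * nat -> R) (W : nat * nat -> NCT) (bw : nat * nat -> R) Mb :
  (forall p, bnd (W p) (bw p)) -> (forall N, rs (fun p => Rabs (c p) * bw p) (SQ N) <= Mb) ->
  L1 (fun n => Clim (fun N => QQ c W N n)) /\ conv1 (QQ c W) (fun n => Clim (fun N => QQ c W N n)).
Proof. intros HW HM.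
  assert (Hbw : forall p, 0 <= bw p) by (intros; eapply bnd_ge0; eauto).
  assert (HM' : forall N, rs (fun p => Rabs (c p * bw p)) (SQ N) <= Mb).
  { intros N; rewrite (rs_ext _ (fun p => Rabs (c p) * bw p)); auto. intros; rewrite Rabs_mult, (Rabs_right (bw x)); auto. apply Rle_ge; auto. }
  pose proof (sq_abs_cv _ _ HM') as HC.
  assert (Hd : forall N M, (N <= M)%nat -> bnd (sub (QQ c W M) (QQ c W N))
     (rs (fun p => Rabs (c p * bw p)) (SQ M) - rs (fun p => Rabs (c p * bw p)) (SQ N))).
  { intros N M H. rewrite QQ_diff by auto.
    rewrite (rs_split (fun p => Rabs (c p * bw p)) (SQ N) (SQ M)) by (auto using NoDup_SQ; intros [j k] Hp; apply in_SQ in Hp; apply in_SQ; lia).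
    replace (rs (fun p => Rabs (c p * bw p)) (SQ N) + rs (fun p => Rabs (c p * bw p))
       (filter (fun x => if in_dec eqd x (SQ N) then false else true) (SQ M)) - rs (fun p => Rabs (c p * bw p)) (SQ N))
      with (rs (fun p => Rabs (c p * bw p)) (filter (fun x => if in_dec eqd x (SQ N) then false else true) (SQ M))) by ring.
    apply (bnd_Csum (fun p => scal (c p) (W p))). intros k _. 
    rewrite Rabs_mult, (Rabs_right (bw k)) by (apply Rle_ge; auto). apply bnd_scal; auto. }
  destruct (complete (QQ c W)) as [A [B _]].
  - intros N. apply L1_Csum_gen. intros; exists (bw k); auto.
  - intros eps He. destruct (HC eps He) as [N0 H0]. exists N0. intros N M HN HM0.
    destruct (le_dec N M) as [Hle|Hle].
    + apply bnd_sub_sym. eapply bnd_mono; [apply Hd; auto|].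
      specialize (H0 M N ltac:(lia) ltac:(lia)). unfold Rdist in H0. pose proof (Rle_abs (rs (fun p => Rabs (c p * bw p)) (SQ M) - rs (fun p => Rabs (c p * bw p)) (SQ N))). lra.
    + eapply bnd_mono; [apply Hd; lia|].
      specialize (H0 N M ltac:(lia) ltac:(lia)). unfold Rdist in H0. pose proof (Rle_abs (rs (fun p => Rabs (c p * bw p)) (SQ N) - rs (fun p => Rabs (c p * bw p)) (SQ M))). lra.
  - split; auto. Qed.

Lemma fcalc2_QQ theta h c a b : fcalc2 theta h c a b =
  (fun n => Clim (fun N => QQ (fun p => c (fst p) (snd p)) (fun p => mul theta (Nat.iter (fst p) (nabla theta h) a) (Nat.iter (snd p) (nabla theta h) b)) N n)).
Proof. apply functional_extensionality; intros n. unfold fcalc2, QQ, SQ. f_equal. apply functional_extensionality; intros N.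
  rewrite Csum_list_prod. reflexivity. Qed.

Section Part2.
Variable theta : nat -> nat -> R.
Notation mul := (mul theta).

Lemma keyW h E a j k : L1 h -> L1 E -> L1 a -> mul E h = mul h E ->
  phi0 (mul E (mul (Nat.iter j (nabla theta h) a) (Nat.iter k (nabla theta h) a))) =
  Cscal ((-1) ^ k) (phi0 (mul (Nat.iter (j + k) (nabla theta h) (mul E a)) a)).
Proof. intros Hh HE Ha Hc.
  assert (Hj : L1 (Nat.iter j (nabla theta h) a)) by (apply L1_iter; auto).
  assert (Hk : L1 (Nat.iter k (nabla theta h) a)) by (apply L1_iter; auto).
  rewrite <- (mulA theta E _ _ HE Hj Hk).
  rewrite <- (iter_comm theta h E a j Hh HE Ha Hc).
  assert (HEa : L1 (mul E a)) by (apply L1_mul; auto).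
  rewrite (phi0_iter theta h _ a k Hh (L1_iter theta h _ j Hh HEa) Ha).
  rewrite <- Nat.iter_add. rewrite Nat.add_comm. reflexivity. Qed.

Lemma part2 h K cH cG a Ma : taylor2 cH Hf -> taylor1 cG Gf -> bnd h K -> bnd a Ma ->
  L1 (fcalc2 theta h cH a a) /\
  phi0 (mul (expA theta (opp h)) (fcalc2 theta h cH a a)) =
  phi0 (mul (fcalc1 theta h cG (mul (expA theta (opp h)) a)) a).
Proof. intros HH HG Hh Ha.
  destruct (expA_conv theta (opp h) K (bnd_opp _ _ Hh)) as [HE _].
  pose proof (expA_comm theta h K Hh) as Hc.
  set (E := expA theta (opp h)) in *.
  assert (HL : L1 h) by (exists K; auto). assert (HLa : L1 a) by (exists Ma; auto).
  destruct HE as [ME HME]. assert (HE : L1 E) by (exists ME; auto).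
  pose proof (bnd_ge0 _ _ Hh) as HK0. pose proof (bnd_ge0 _ _ Ha) as HMa0.
  set (Rr := 4 * K + 1).
  assert (HR : 0 < Rr) by (unfold Rr; lra).
  set (Ea := mul E a). pose proof (mul_bnd theta E a ME Ma HME Ha) as HEa. fold Ea in HEa.
  set (MEa := 2 * ME * Ma) in *.
  pose proof (bnd_ge0 _ _ HEa) as HMEa0.
  set (T := fun n => phi0 (mul (Nat.iter n (nabla theta h) Ea) a)).
  assert (HT : forall n, cn (T n) <= (2 * MEa * Ma) * Rr ^ n).
  { intros n. unfold T, phi0. eapply Rle_trans; [apply (bnd_pt _ _ Z4zero (mul_bnd theta _ _ _ _ (bnd_iter theta h Ea K MEa n Hh HEa) Ha))|].
    assert ((4 * K) ^ n <= Rr ^ n) by (apply pow_incr; unfold Rr; lra).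
    pose proof (pow_le (4 * K) n ltac:(lra)).
    assert (0 <= MEa * Ma) by (apply Rmult_le_pos; auto).
    assert (MEa * Ma * (4 * K) ^ n <= MEa * Ma * Rr ^ n) by (apply Rmult_le_compat_l; auto).
    nra. }
  set (c := fun p : nat * nat => cH (fst p) (snd p)).
  set (W := fun p : nat * nat => mul (Nat.iter (fst p) (nabla theta h) a) (Nat.iter (snd p) (nabla theta h) a)).
  destruct (taylor2_abs cH Rr HH HR) as [M HM].
  assert (HW : forall p, bnd (W p) (2 * Ma * Ma * (Rr ^ fst p * Rr ^ snd p))).
  { intros [j k]. unfold W; simpl. eapply bnd_mono; [apply mul_bnd; apply bnd_iter; eauto|].
    assert ((4 * K) ^ j <= Rr ^ j) by (apply pow_incr; unfold Rr; lra).
    assert ((4 * K) ^ k <= Rr ^ k) by (apply pow_incr; unfold Rr; lra).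
    pose proof (pow_le (4 * K) j ltac:(lra)). pose proof (pow_le (4 * K) k ltac:(lra)).
    assert ((4 * K) ^ j * Ma <= Rr ^ j * Ma) by (apply Rmult_le_compat_r; auto).
    assert ((4 * K) ^ k * Ma <= Rr ^ k * Ma) by (apply Rmult_le_compat_r; auto).
    assert (0 <= (4 * K) ^ j * Ma) by (apply Rmult_le_pos; auto).
    assert (0 <= (4 * K) ^ k * Ma) by (apply Rmult_le_pos; auto).
    assert ((4 * K) ^ j * Ma * ((4 * K) ^ k * Ma) <= Rr ^ j * Ma * (Rr ^ k * Ma)) by (apply Rmult_le_compat; auto).
    nra. }
  destruct (sq_conv c W (fun p => 2 * Ma * Ma * (Rr ^ fst p * Rr ^ snd p)) (2 * Ma * Ma * M) HW) as [HF HcF].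
  { intros N. rewrite (rs_ext _ (fun p => (2 * Ma * Ma) * (Rabs (cH (fst p) (snd p)) * Rr ^ fst p * Rr ^ snd p))).
    rewrite rs_scal. apply Rmult_le_compat_l; [nra|apply HM]. intros; unfold c; ring. }
  rewrite (fcalc2_QQ theta h cH a a). fold c W.
  split; [exact HF|].
  set (F := fun n => Clim (fun N => QQ c W N n)) in *.
  assert (HQs : forall N, L1 (QQ c W N)) by (intros; apply L1_Csum_gen; intros; exists (2 * Ma * Ma * (Rr ^ fst k * Rr ^ snd k)); auto).
  pose proof (conv1_mul_l theta E _ _ HE HcF HQs HF Z4zero) as A.
  destruct (fcalc1_conv theta h cG Gf Ea K MEa HG Hh HEa) as [HF2 HcF2].
  assert (HPs : forall N, L1 (psum cG (fun j => Nat.iter j (nabla theta h) Ea) N)).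
  { intros N; apply L1_Csum_gen; intros; apply L1_iter; auto. exists MEa; auto. }
  pose proof (conv1_mul_r theta a _ _ HLa HcF2 HPs HF2 Z4zero) as B.
  assert (EA : forall N, mul E (QQ c W N) Z4zero =
    Csum (map (fun p => Cscal (c p * (-1) ^ snd p) (T (fst p + snd p)%nat)) (SQ N))).
  { intros N. unfold QQ. rewrite (mul_Csum_gen theta E c W); auto.
    2: { intros; exists (2 * Ma * Ma * (Rr ^ fst k * Rr ^ snd k)); auto. }
    f_equal. apply map_ext. intros [j k]. unfold W; simpl.
    pose proof (keyW h E a j k HL HE HLa Hc) as Z. unfold phi0 in Z. rewrite Z. unfold T, phi0, Ea.
    unfold Cscal; simpl. apply C_ext; simpl; ring. }
  assert (EB : forall N, mul (psum cG (fun j => Nat.iter j (nabla theta h) Ea) N) a Z4zero =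
    Csum (map (fun n => Cscal (cG n) (T n)) (seq 0 (N + 1)))).
  { intros N. unfold psum. rewrite (mul_Csum_gen_r theta a cG); auto. intros; apply L1_iter; auto. exists MEa; auto. }
  assert (G : forall (pr : C -> R), (forall x, Rabs (pr x) <= cn x) ->
      (forall x y, pr (Cadd x y) = pr x + pr y) -> (forall r x, pr (Cscal r x) = r * pr x) -> pr C0 = 0 ->
      Un_cv (fun N => pr (mul E (QQ c W N) Z4zero) - pr (mul (psum cG (fun j => Nat.iter j (nabla theta h) Ea) N) a Z4zero)) 0).
  { intros pr Hpr Hadd Hsc H0.
    assert (Hcs : forall {I} (f : I -> C) l, pr (Csum (map f l)) = rs (fun x => pr (f x)) l).
    { intros I f l; induction l; simpl. rewrite rs_nil; auto. rewrite rs_cons, Hadd, IHl; auto. }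
    set (g := fun p : nat * nat => c p * (-1) ^ snd p * pr (T (fst p + snd p)%nat)).
    assert (Hg : forall N, rs (fun p => Rabs (g p)) (SQ N) <= (2 * MEa * Ma) * M).
    { intros N. eapply Rle_trans; [|apply (Rmult_le_compat_l (2 * MEa * Ma) _ _ ltac:(nra) (HM N))].
      rewrite <- rs_scal. apply rs_le. intros [j k] _. unfold g, c; simpl.
      rewrite !Rabs_mult, pow_1_abs. specialize (Hpr (T (j + k)%nat)). specialize (HT (j + k)%nat).
      rewrite pow_add in HT. pose proof (Rabs_pos (cH j k)).
      assert (Rabs (pr (T (j + k)%nat)) <= 2 * MEa * Ma * (Rr ^ j * Rr ^ k)) by lra.
      replace (Rabs (cH j k) * 1 * Rabs (pr (T (j + k)%nat))) with (Rabs (cH j k) * Rabs (pr (T (j + k)%nat))) by ring.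
      replace (2 * MEa * Ma * (Rabs (cH j k) * Rr ^ j * Rr ^ k)) with (Rabs (cH j k) * (2 * MEa * Ma * (Rr ^ j * Rr ^ k))) by ring.
      apply Rmult_le_compat_l; auto. }
    eapply Un_cv_ext; [|apply (sq_tri g _ Hg)]. intros N. simpl.
    rewrite EA, EB, !Hcs. f_equal.
    - apply rs_ext; intros [j k] _; unfold g; simpl; rewrite Hsc; ring.
    - rewrite (rs_TL (fun j k => g (j, k))). rewrite <- rs_seq. apply rs_ext. intros n _.
      rewrite Hsc. rewrite <- (dH_eq_cG cH cG HH HG n). unfold dH. rewrite Rmult_comm, scal_sum.
      symmetry. apply sum_eq. intros j Hj. unfold g, c; simpl. replace (j + (n - j))%nat with n by lia. ring. }
  assert (G1 := G fst cn_le_fst (fun x y => eq_refl) (fun r x => eq_refl) eq_refl).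
  assert (G2 := G snd cn_le_snd (fun x y => eq_refl) (fun r x => eq_refl) eq_refl).
  unfold phi0. destruct A as [A1 A2]. destruct B as [B1 B2].
  apply C_ext.
  - pose proof (CV_minus _ _ _ _ A1 B1). apply Rminus_diag_uniq. eapply UL_sequence; eauto.
  - pose proof (CV_minus _ _ _ _ A2 B2). apply Rminus_diag_uniq. eapply UL_sequence; eauto. Qed.
End Part2.

Lemma mul_sum4 theta e f : L1 e -> (forall i, L1 (f i)) -> mul theta e (sum4 f) = sum4 (fun i => mul theta e (f i)).
Proof. intros He Hf. unfold sum4.
  rewrite !mul_addR; auto; repeat apply L1_add; auto. Qed.

Lemma bnd_sum4 (f : nat -> NCT) K : (forall i, bnd (f i) K) -> bnd (sum4 f) (K + K + K + K).
Proof. intros H. unfold sum4. repeat apply bnd_add; auto. Qed.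

Theorem theorem5p4 (theta : nat -> nat -> R)
  (Hskew : forall k l : nat, theta k l = - theta l k)
  (cK : nat -> R) (cH : nat -> nat -> R) (cG : nat -> R)
  (HK : taylor1 cK Kf) (HH : taylor2 cH Hf) (HG : taylor1 cG Gf)
  (h : NCT) (Hsmooth : rapid h) (Hsa : star theta h = h) :
  phi0 (curvR theta cK cH h) =
  Cadd (Cscal (1 / 2) (phi0 (sum4 (fun i => mul theta (expA theta (opp h)) (delta i (delta i h))))))
       (phi0 (sum4 (fun i =>
          mul theta (fcalc1 theta h cG (mul theta (expA theta (opp h)) (delta i h))) (delta i h)))).
Proof.
  destruct (bnd_rapid h Hsmooth) as [K HKb].
  assert (Hh : bnd h K) by apply (HKb 1%nat).
  destruct (expA_conv theta (opp h) K (bnd_opp _ _ Hh)) as [HE _].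
  unfold curvR. change (phi0 (add ?f ?g)) with (Cadd (phi0 f) (phi0 g)).
  rewrite (part1 theta h K cK _ (K + K + K + K) HK Hh).
  2: { apply bnd_sum4. intros i; apply HKb. }
  rewrite (mul_sum4 theta _ (fun i => delta i (delta i h))) by (auto; intros i; exists K; apply HKb).
  rewrite (mul_sum4 theta _ (fun i => fcalc2 theta h cH (delta i h) (delta i h))).
  2: auto.
  2: { intros i. apply (part2 theta h K cH cG (delta i h) K HH HG Hh (proj1 (proj2 (HKb i)))). }
  f_equal.
  pose proof (proj2 (part2 theta h K cH cG (delta 1 h) K HH HG Hh (proj1 (proj2 (HKb 1%nat))))) as P1.
  pose proof (proj2 (part2 theta h K cH cG (delta 2 h) K HH HG Hh (proj1 (proj2 (HKb 2%nat))))) as P2.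
  pose proof (proj2 (part2 theta h K cH cG (delta 3 h) K HH HG Hh (proj1 (proj2 (HKb 3%nat))))) as P3.
  pose proof (proj2 (part2 theta h K cH cG (delta 4 h) K HH HG Hh (proj1 (proj2 (HKb 4%nat))))) as P4.
  unfold sum4, phi0, add in *. rewrite P1, P2, P3, P4. reflexivity. Qed.
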